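(* Let $p(x)=a_0+a_1x+\dots+a_dx^d$, $d\ge1$, have positive integer coefficients, $r=p(1)$, and fix a type map $\tau$ as in the context. For every $q\in(0,1/a_0)$, every integer $k\ge1$ and every $x\in[0,1]$, the derivative $$\mathcal T^k_{p,q}(x)=\frac{\partial^k}{\partial s^k}S^p_{q,s}(x)\Big|_{s=q}$$ exists, and the function $\mathcal T^k_{p,q}$ is continuous on $[0,1]$.
   Context: Let $\mathcal A=\{0,1,\dots,r-1\}$ and let $\tau:\mathcal A\to\{0,\dots,d\}$ be a fixed map with $|\tau^{-1}(j)|=a_j$ for each $j$. For $q\in(0,1/a_0)$ let $t_q\in(0,1)$ be the unique solution in $(0,1)$ of $a_0q^d+a_1q^{d-1}t+\dots+a_dt^d=q^{d-1}$, and let $\nu_q$ be the product (Bernoulli) measure on $\mathcal A^{\mathbb N}$ whose coordinates are i.i.d. with $\nu_q(\omega_i=a)=t_q^{\tau(a)}/q^{\tau(a)-1}$. Let $F_q(y)=\nu_q\big(\{\omega:\sum_{i\ge1}\omega_ir^{-i}\le y\}\big)$ for $y\in[0,1]$; $F_q$ is a continuous strictly increasing bijection of $[0,1]$. For $q_1,q_2\in(0,1/a_0)$ put $S^p_{q_1,q_2}=F_{q_2}\circ F_{q_1}^{-1}$ (equivalently, $S^p_{q_1,q_2}$ maps the point with a given ''$q_1$-$r$-adic'' digit sequence to the point with the same digit sequence in the $q_2$-$r$-adic representation). *)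

(* Defs.v *)
From Stdlib Require Import Reals Lra Lia ZArith Arith List ClassicalEpsilon.
Open Scope R_scope.

(* r = p(1) = a_0 + ... + a_d *)
Definition rr (d : nat) (a : nat -> nat) : nat :=
  fold_right Nat.add 0%nat (map a (seq 0 (S d))).

(* |tau^{-1}(j)| = a_j, counted over the alphabet {0,..,r-1} *)
Definition tau_count (r : nat) (tau : nat -> nat) (j : nat) : nat :=
  length (filter (fun b => Nat.eqb (tau b) j) (seq 0 r)).

(* t_q: the (unique, by the paper) solution in (0,1) of
   a_0 q^d + a_1 q^(d-1) t + ... + a_d t^d = q^(d-1). *)
Definition t_eq (d : nat) (a : nat -> nat) (q t : R) : Prop :=
  0 < t < 1 /\
  sum_f_R0 (fun j => INR (a j) * q ^ (d - j) * t ^ j) d = q ^ (d - 1).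

Definition tq (d : nat) (a : nat -> nat) (q : R) : R :=
  epsilon (inhabits 0) (fun t => t_eq d a q t).

(* nu_q(omega_i = b) = t_q^{tau b} / q^{tau b - 1} *)
Definition piq (d : nat) (a tau : nat -> nat) (q : R) (b : nat) : R :=
  tq d a q ^ (tau b) * q / q ^ (tau b).

(* nu_q(omega_i < b) *)
Definition cq (d : nat) (a tau : nat -> nat) (q : R) (b : nat) : R :=
  fold_right Rplus 0 (map (piq d a tau q) (seq 0 b)).

Fixpoint pprod (f : nat -> R) (n : nat) : R :=
  match n with O => 1 | S m => pprod f m * f (S m) end.

(* i-th r-adic digit (i >= 1) of y in [0,1): floor(r^i y) mod r *)
Definition digit (r : nat) (y : R) (i : nat) : nat :=
  Z.to_nat (Z.modulo (up (INR r ^ i * y) - 1) (Z.of_nat r)).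

(* F_q(y) = nu_q{omega : sum omega_i r^-i <= y}, computed digitwise:
   sum_{i>=1} nu_q(omega_1..omega_{i-1} = y_1..y_{i-1}) * nu_q(omega_i < y_i). *)
Definition Fq (d : nat) (a tau : nat -> nat) (q y : R) : R :=
  if Rle_dec 1 y then 1 else
  epsilon (inhabits 0) (fun l =>
    infinite_sum (fun n =>
      pprod (fun j => piq d a tau q (digit (rr d a) y j)) n *
      cq d a tau q (digit (rr d a) y (S n))) l).

Definition Fq_inv (d : nat) (a tau : nat -> nat) (q x : R) : R :=
  epsilon (inhabits 0) (fun y => 0 <= y <= 1 /\ Fq d a tau q y = x).

Definition Sp (d : nat) (a tau : nat -> nat) (q1 q2 x : R) : R :=
  Fq d a tau q2 (Fq_inv d a tau q1 x).

Fixpoint is_nth_deriv (k : nat) (f : R -> R) (s v : R) : Prop :=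
  match k with
  | O => v = f s
  | S k' => exists delta, 0 < delta /\ exists g : R -> R,
      (forall t, Rabs (t - s) < delta -> is_nth_deriv k' f t (g t)) /\
      derivable_pt_lim g s v
  end.

Definition continuous_on_01 (T : R -> R) : Prop :=
  forall x, 0 <= x <= 1 -> forall eps, 0 < eps -> exists delta, 0 < delta /\
    forall y, 0 <= y <= 1 -> Rabs (y - x) < delta -> Rabs (T y - T x) < eps.

(* Main.v *)
Require Import Defs.
From Stdlib Require Import Reals Lra Lia ZArith Arith List ClassicalEpsilon FunctionalExtensionality Ranalysis5.
Open Scope R_scope.

Module MA.

Lemma dpl_ext_loc (f g : R -> R) x l :
  (exists del, 0 < del /\ forall y, Rabs (y - x) < del -> f y = g y) ->
  derivable_pt_lim f x l -> derivable_pt_lim g x l.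
Proof.
  intros [del [Hdel Heq]] Hf eps Heps.
  destruct (Hf eps Heps) as [d1 Hd1].
  assert (Hm : 0 < Rmin d1 del) by (apply Rmin_pos; [apply cond_pos|lra]).
  exists (mkposreal _ Hm); intros h Hh Hlt; simpl in Hlt.
  rewrite <- (Heq x), <- (Heq (x+h)).
  - apply Hd1; auto. eapply Rlt_le_trans; [exact Hlt| apply Rmin_l].
  - replace (x + h - x) with h by ring. eapply Rlt_le_trans; [exact Hlt| apply Rmin_r].
  - replace (x - x) with 0 by ring. rewrite Rabs_R0; lra.
Qed.

Lemma dpl_plus (f g : R -> R) x l1 l2 :
  derivable_pt_lim f x l1 -> derivable_pt_lim g x l2 ->
  derivable_pt_lim (fun y => f y + g y) x (l1 + l2).
Proof. intros; apply (derivable_pt_lim_plus f g); auto. Qed.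

Lemma dpl_mult (f g : R -> R) x l1 l2 :
  derivable_pt_lim f x l1 -> derivable_pt_lim g x l2 ->
  derivable_pt_lim (fun y => f y * g y) x (l1 * g x + f x * l2).
Proof. intros; apply (derivable_pt_lim_mult f g); auto. Qed.

Lemma dpl_const (c x : R) : derivable_pt_lim (fun _ => c) x 0.
Proof. apply (derivable_pt_lim_const c). Qed.

Lemma dpl_id (x : R) : derivable_pt_lim (fun y => y) x 1.
Proof. apply derivable_pt_lim_id. Qed.

Lemma dpl_inv (f : R -> R) x l :
  derivable_pt_lim f x l -> f x <> 0 ->
  derivable_pt_lim (fun y => / f y) x (- l * (/ f x * / f x)).
Proof.
  intros Hf Hx.
  assert (H := derivable_pt_lim_div (fun _ => 1) f x 0 l (dpl_const 1 x) Hf Hx).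
  replace (- l * (/ f x * / f x)) with ((0 * f x - l * 1) / Rsqr (f x)).
  - eapply dpl_ext_loc; [|exact H]. exists 1; split; [lra|]. intros y _.
    unfold div_fct; simpl. unfold Rdiv; ring.
  - unfold Rsqr; field; auto.
Qed.

Lemma dpl_pow (f : R -> R) x l n :
  derivable_pt_lim f x l ->
  derivable_pt_lim (fun y => f y ^ n) x (INR n * f x ^ pred n * l).
Proof.
  intros Hf.
  assert (H := derivable_pt_lim_comp f (fun y => y ^ n) x l _ Hf (derivable_pt_lim_pow (f x) n)).
  exact H.
Qed.

Lemma dpl_unique (f g : R -> R) x l1 l2 :
  (exists del, 0 < del /\ forall y, Rabs (y - x) < del -> f y = g y) ->
  derivable_pt_lim f x l1 -> derivable_pt_lim g x l2 -> l1 = l2.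
Proof.
  intros Hloc H1 H2. apply (uniqueness_limite g x); auto.
  eapply dpl_ext_loc; eauto.
Qed.

Fixpoint fsum (f : nat -> R) (n : nat) : R :=
  match n with O => 0 | S m => fsum f m + f m end.

Lemma fsum_ext f g n : (forall j, (j < n)%nat -> f j = g j) -> fsum f n = fsum g n.
Proof.
  induction n; simpl; intros H; auto.
  rewrite IHn by (intros; apply H; lia). rewrite H by lia. auto.
Qed.

Lemma fsum_plus f g n : fsum (fun j => f j + g j) n = fsum f n + fsum g n.
Proof. induction n; simpl; [ring| rewrite IHn; ring]. Qed.

Lemma fsum_scal c f n : fsum (fun j => c * f j) n = c * fsum f n.
Proof. induction n; simpl; [ring| rewrite IHn; ring]. Qed.

Lemma fsum_sum_f_R0 f n : sum_f_R0 f n = fsum f (S n).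
Proof. induction n; simpl; [ring| simpl in IHn; rewrite IHn; ring]. Qed.

Lemma fsum_le f g n : (forall j, (j < n)%nat -> f j <= g j) -> fsum f n <= fsum g n.
Proof.
  induction n; simpl; intros H; [lra|].
  assert (fsum f n <= fsum g n) by (apply IHn; intros; apply H; lia).
  assert (f n <= g n) by (apply H; lia). lra.
Qed.

Lemma fsum_nonneg f n : (forall j, (j < n)%nat -> 0 <= f j) -> 0 <= fsum f n.
Proof.
  intros H. replace 0 with (fsum (fun _ => 0) n).
  - apply fsum_le; auto.
  - induction n; simpl; auto. rewrite IHn; [ring|]. intros; apply H; lia.
Qed.

Lemma fsum_abs f n : Rabs (fsum f n) <= fsum (fun j => Rabs (f j)) n.
Proof.
  induction n; simpl. rewrite Rabs_R0; lra.
  eapply Rle_trans; [apply Rabs_triang|]. lra.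
Qed.

Lemma dpl_fsum (F F' : nat -> R -> R) n x :
  (forall j, (j < n)%nat -> derivable_pt_lim (F j) x (F' j x)) ->
  derivable_pt_lim (fun y => fsum (fun j => F j y) n) x (fsum (fun j => F' j x) n).
Proof.
  induction n; simpl; intros H.
  - apply dpl_const.
  - apply dpl_plus; [apply IHn; intros; apply H; lia| apply H; lia].
Qed.

Lemma fsum_split f n m : fsum f (n + m) = fsum f n + fsum (fun j => f (n + j)%nat) m.
Proof. induction m; simpl. rewrite Nat.add_0_r; ring. rewrite Nat.add_succ_r; simpl; rewrite IHm; ring. Qed.

End MA.
Import MA.

Module MB.

Section BndSec.
Variables lo hi : R.
Hypothesis Hlohi : lo < hi.

Lemma U_nbhd s : lo < s < hi ->
  exists del, 0 < del /\ forall y, Rabs (y - s) < del -> lo < y < hi.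
Proof.
  intros Hs. exists (Rmin (s - lo) (hi - s)); split.
  - apply Rmin_pos; lra.
  - intros y Hy. assert (H1 := Rmin_l (s - lo) (hi - s)). assert (H2 := Rmin_r (s - lo) (hi - s)).
    apply Rabs_def2 in Hy. lra.
Qed.

Lemma dpl_ext_U (f g : R -> R) s l : lo < s < hi ->
  (forall y, lo < y < hi -> f y = g y) -> derivable_pt_lim f s l -> derivable_pt_lim g s l.
Proof.
  intros Hs Heq. apply dpl_ext_loc. destruct (U_nbhd s Hs) as [del [Hd Hy]].
  exists del; split; auto.
Qed.

Fixpoint Bnd {I : Type} (J : nat) (f : I -> R -> R) (w : I -> R) : Prop :=
  (exists K, forall i s, lo < s < hi -> Rabs (f i s) <= K * w i) /\
  match J with
  | O => True
  | S J' => exists f' : I -> R -> R,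
      (forall i s, lo < s < hi -> derivable_pt_lim (f i) s (f' i s)) /\ Bnd J' f' w
  end.

Lemma B_le {I} J (f : I -> R -> R) w : Bnd (S J) f w -> Bnd J f w.
Proof.
  revert f; induction J; intros f [HK [f' [Hd HB]]]; simpl; split; auto.
  exists f'; split; auto.
Qed.

Lemma B_bound {I} J (f : I -> R -> R) w : Bnd J f w ->
  exists K, forall i s, lo < s < hi -> Rabs (f i s) <= K * w i.
Proof. destruct J; simpl; tauto. Qed.

Lemma B_ext {I} J (f g : I -> R -> R) w :
  (forall i s, lo < s < hi -> f i s = g i s) -> Bnd J f w -> Bnd J g w.
Proof.
  revert f g; induction J; intros f g Heq [[K HK] HB]; simpl; split.
  - exists K; intros; rewrite <- Heq; auto.
  - auto.
  - exists K; intros; rewrite <- Heq; auto.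
  - destruct HB as [f' [Hd HB]]. exists f'; split; auto.
    intros i s Hs. apply (dpl_ext_U (f i)); auto.
Qed.

Lemma B_plus {I} J (f g : I -> R -> R) w :
  Bnd J f w -> Bnd J g w -> Bnd J (fun i s => f i s + g i s) w.
Proof.
  revert f g; induction J; intros f g [[K1 H1] Hf] [[K2 H2] Hg]; simpl; split.
  1,3: exists (K1 + K2); intros i s Hs;
    eapply Rle_trans; [apply Rabs_triang|];
    specialize (H1 i s Hs); specialize (H2 i s Hs); lra.
  - auto.
  - destruct Hf as [f' [Hf1 Hf2]]; destruct Hg as [g' [Hg1 Hg2]].
    exists (fun i s => f' i s + g' i s); split.
    + intros; apply dpl_plus; auto.
    + apply IHJ; auto.
Qed.

Lemma B_weight {I} J (f : I -> R -> R) w w' C :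
  (forall i, 0 <= w i) -> (forall i, w i <= C * w' i) -> Bnd J f w -> Bnd J f w'.
Proof.
  intros Hw Hww'. revert f; induction J; intros f [[K H1] Hf]; simpl; split.
  1,3: exists (Rabs K * C); intros i s Hs; specialize (H1 i s Hs);
    eapply Rle_trans; [exact H1|];
    apply Rle_trans with (Rabs K * w i);
    [apply Rmult_le_compat_r; [auto| apply RRle_abs]
    | rewrite Rmult_assoc; apply Rmult_le_compat_l; [apply Rabs_pos| auto]].
  - auto.
  - destruct Hf as [f' [Hf1 Hf2]]. exists f'; split; auto.
Qed.

Lemma B_mult {I} J (f g : I -> R -> R) w1 w2 :
  (forall i, 0 <= w1 i) -> (forall i, 0 <= w2 i) ->
  Bnd J f w1 -> Bnd J g w2 -> Bnd J (fun i s => f i s * g i s) (fun i => w1 i * w2 i).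
Proof.
  intros Hw1 Hw2. revert f g; induction J; intros f g Hf Hg.
  - destruct Hf as [[K1 H1] _]; destruct Hg as [[K2 H2] _]. simpl; split; auto.
    exists (Rabs K1 * Rabs K2). intros i s Hs. rewrite Rabs_mult.
    specialize (H1 i s Hs); specialize (H2 i s Hs).
    assert (Rabs (f i s) <= Rabs K1 * w1 i).
    { eapply Rle_trans; [exact H1|]. apply Rmult_le_compat_r; auto. apply RRle_abs. }
    assert (Rabs (g i s) <= Rabs K2 * w2 i).
    { eapply Rle_trans; [exact H2|]. apply Rmult_le_compat_r; auto. apply RRle_abs. }
    replace (Rabs K1 * Rabs K2 * (w1 i * w2 i)) with ((Rabs K1 * w1 i) * (Rabs K2 * w2 i)) by ring.
    apply Rmult_le_compat; auto; apply Rabs_pos.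
  - assert (Hf0 := Hf); assert (Hg0 := Hg).
    destruct Hf as [[K1 H1] [f' [Hf1 Hf2]]]; destruct Hg as [[K2 H2] [g' [Hg1 Hg2]]].
    split.
    + exists (Rabs K1 * Rabs K2). intros i s Hs. rewrite Rabs_mult.
      specialize (H1 i s Hs); specialize (H2 i s Hs).
      assert (Rabs (f i s) <= Rabs K1 * w1 i).
      { eapply Rle_trans; [exact H1|]. apply Rmult_le_compat_r; auto. apply RRle_abs. }
      assert (Rabs (g i s) <= Rabs K2 * w2 i).
      { eapply Rle_trans; [exact H2|]. apply Rmult_le_compat_r; auto. apply RRle_abs. }
      replace (Rabs K1 * Rabs K2 * (w1 i * w2 i)) with ((Rabs K1 * w1 i) * (Rabs K2 * w2 i)) by ring.
      apply Rmult_le_compat; auto; apply Rabs_pos.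
    + exists (fun i s => f' i s * g i s + f i s * g' i s); split.
      * intros; apply dpl_mult; auto.
      * apply B_plus; apply IHJ; auto; apply B_le; auto.
Qed.

Lemma B_const {I} J (c : I -> R) w :
  (forall i, 0 <= w i) -> (exists K, forall i, Rabs (c i) <= K * w i) ->
  Bnd J (fun i _ => c i) w.
Proof.
  intros Hw [K HK]. induction J; simpl; split.
  1,3: exists K; auto.
  - auto.
  - exists (fun _ _ => 0); split.
    + intros; apply dpl_const.
    + clear IHJ; induction J; simpl; split; try (exists 0; intros; rewrite Rabs_R0; lra); auto.
      exists (fun _ _ => 0); split; auto. intros; apply dpl_const.
Qed.

Lemma B_id {I} J : Bnd (I:=I) J (fun _ s => s) (fun _ => 1).
Proof.
  destruct J; simpl; split.
  1,3: exists (Rabs lo + Rabs hi); intros i s Hs; rewrite Rmult_1_r;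
    unfold Rabs; repeat destruct Rcase_abs; lra.
  - auto.
  - exists (fun _ _ => 1); split.
    + intros; apply dpl_id.
    + apply B_const; [intros; lra| exists 1; intros; rewrite Rabs_R1; lra].
Qed.

Lemma B_reindex {I I2} J (g : I2 -> R -> R) w (h : I -> I2) :
  Bnd J g w -> Bnd J (fun i => g (h i)) (fun i => w (h i)).
Proof.
  revert g; induction J; intros g [[K HK] Hg]; simpl; split.
  1,3: exists K; intros; auto.
  - auto.
  - destruct Hg as [g' [H1 H2]]. exists (fun i => g' (h i)); split; auto.
Qed.

Lemma B_fsum {I} J (F : nat -> I -> R -> R) w N :
  (forall i, 0 <= w i) -> (forall j, (j < N)%nat -> Bnd J (F j) w) ->
  Bnd J (fun i s => fsum (fun j => F j i s) N) w.
Proof.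
  intros Hw. induction N; intros H; simpl.
  - apply (B_const J (fun _ => 0)); auto. exists 0; intros; rewrite Rabs_R0; lra.
  - apply B_plus; [apply IHN; intros; apply H; lia| apply H; lia].
Qed.

Lemma B_inv {I} J (f : I -> R -> R) m :
  0 < m -> (forall i s, lo < s < hi -> m <= Rabs (f i s)) ->
  Bnd J f (fun _ => 1) -> Bnd J (fun i s => / f i s) (fun _ => 1).
Proof.
  intros Hm Hlow. revert f Hlow; induction J; intros f Hlow Hf.
  - simpl; split; auto. exists (/ m). intros i s Hs. rewrite Rmult_1_r.
    specialize (Hlow i s Hs). rewrite Rabs_inv.
    apply Rinv_le_contravar; auto.
  - assert (Hf0 := Hf). destruct Hf as [_ [f' [Hf1 Hf2]]]. split.
    + exists (/ m). intros i s Hs. rewrite Rmult_1_r.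
      specialize (Hlow i s Hs). rewrite Rabs_inv.
      apply Rinv_le_contravar; auto.
    + exists (fun i s => - f' i s * (/ f i s * / f i s)); split.
      * intros i s Hs. apply dpl_inv; auto.
        specialize (Hlow i s Hs). intro E; rewrite E, Rabs_R0 in Hlow; lra.
      * assert (HI : Bnd J (fun i s => / f i s) (fun _ => 1)) by (apply IHJ; auto; apply B_le; auto).
        assert (Hn : Bnd J (fun i s => - f' i s) (fun _ => 1)).
        { apply (B_ext J (fun i s => (-1) * f' i s)); [intros; ring|].
          apply (B_weight J _ (fun _ => 1 * 1) _ 1); [intros; lra| intros; lra|].
          apply B_mult; [intros; lra| intros; lra| |auto].
          apply B_const; [intros; lra| exists 1; intros; unfold Rabs; destruct Rcase_abs; lra]. }
        apply (B_weight J _ (fun _ => 1 * (1 * 1)) _ 1); [intros; lra| intros; lra|].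
        apply B_mult; try (intros; lra); auto.
        apply B_mult; try (intros; lra); auto.
Qed.

Lemma B_pow_fam {I} J (f : I -> R -> R) (e : I -> nat) D :
  (forall i, (e i <= D)%nat) ->
  Bnd J f (fun _ => 1) -> Bnd J (fun i s => f i s ^ e i) (fun _ => 1).
Proof.
  intros He. revert f e He; induction J; intros f e He Hf.
  - destruct Hf as [[K HK] _]. split; auto.
    exists ((1 + Rabs K) ^ D). intros i s Hs. rewrite Rmult_1_r, <- RPow_abs.
    specialize (HK i s Hs). rewrite Rmult_1_r in HK.
    apply Rle_trans with ((1 + Rabs K) ^ e i).
    + apply pow_incr; split; [apply Rabs_pos|]. assert (K <= Rabs K) by apply RRle_abs. lra.
    + apply Rle_pow; auto. assert (0 <= Rabs K) by apply Rabs_pos. lra.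
  - assert (Hf0 := Hf). destruct Hf as [[K HK] [f' [Hf1 Hf2]]]. split.
    + exists ((1 + Rabs K) ^ D). intros i s Hs. rewrite Rmult_1_r, <- RPow_abs.
      specialize (HK i s Hs). rewrite Rmult_1_r in HK.
      apply Rle_trans with ((1 + Rabs K) ^ e i).
      * apply pow_incr; split; [apply Rabs_pos|]. assert (K <= Rabs K) by apply RRle_abs. lra.
      * apply Rle_pow; auto. assert (0 <= Rabs K) by apply Rabs_pos. lra.
    + exists (fun i s => INR (e i) * f i s ^ pred (e i) * f' i s); split.
      * intros; apply dpl_pow; auto.
      * apply (B_weight J _ (fun _ => 1 * 1 * 1) _ 1); [intros; lra| intros; lra|].
        apply B_mult; try (intros; lra); auto.
        apply B_mult; try (intros; lra); auto.
        -- apply B_const; [intros; lra|]. exists (INR D). intros i.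
           rewrite Rmult_1_r, Rabs_right by (apply Rle_ge, pos_INR). apply le_INR; auto.
        -- apply IHJ; [intros; specialize (He i); lia| apply B_le; auto].
Qed.

Definition jet (J : nat) (D : nat -> R -> R) : Prop :=
  forall m, (m < J)%nat -> forall s, lo < s < hi -> derivable_pt_lim (D m) s (D (S m) s).

Lemma B_extract {I} J (f : I -> R -> R) w : (forall i, 0 <= w i) -> Bnd J f w ->
  exists (D : nat -> I -> R -> R) K, (forall i, D O i = f i) /\ (forall i, jet J (fun m => D m i)) /\
    forall m i s, (m <= J)%nat -> lo < s < hi -> Rabs (D m i s) <= K * w i.
Proof.
  intros Hw. revert f; induction J; intros f [[K HK] Hf].
  - exists (fun _ => f), K. split; [auto| split].
    + intros i m Hm; lia.
    + intros m i s Hm Hs. replace m with O by lia. auto.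
  - destruct Hf as [f' [Hf1 Hf2]]. destruct (IHJ f' Hf2) as [D' [K' [H0 [H1 H2]]]].
    exists (fun m => match m with O => f | S m' => D' m' end), (Rmax K K'). split; [auto| split].
    + intros i m Hm s Hs. destruct m.
      * rewrite H0; auto.
      * apply H1; auto; lia.
    + intros m i s Hm Hs. destruct m.
      * eapply Rle_trans; [apply HK; auto| apply Rmult_le_compat_r; [auto| apply Rmax_l]].
      * eapply Rle_trans; [apply H2; auto; lia| apply Rmult_le_compat_r; [auto| apply Rmax_r]].
Qed.

Lemma jet_unique J (D D' : nat -> R -> R) : jet J D -> jet J D' ->
  (forall s, lo < s < hi -> D O s = D' O s) ->
  forall m, (m <= J)%nat -> forall s, lo < s < hi -> D m s = D' m s.
Proof.
  intros HD HD' H0 m. induction m; intros Hm s Hs; auto.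
  apply (dpl_unique (D m) (D' m) s).
  - destruct (U_nbhd s Hs) as [del [Hd Hy]]. exists del; split; auto.
    intros y Hy'. apply IHm; [lia| auto].
  - apply HD; auto; lia.
  - apply HD'; auto; lia.
Qed.

Lemma jet_le J J' D : (J' <= J)%nat -> jet J D -> jet J' D.
Proof. intros H HJ m Hm; apply HJ; lia. Qed.

Lemma jet_plus J D1 D2 : jet J D1 -> jet J D2 -> jet J (fun m s => D1 m s + D2 m s).
Proof. intros H1 H2 m Hm s Hs. apply dpl_plus; auto. Qed.

Lemma jet_fsum J (D : nat -> nat -> R -> R) N : (forall j, (j < N)%nat -> jet J (fun m => D m j)) ->
  jet J (fun m s => fsum (fun j => D m j s) N).
Proof. intros H m Hm s Hs. apply (dpl_fsum (fun j => D m j) (fun j => D (S m) j)). intros; apply H; auto. Qed.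

Lemma jet_const J c : jet J (fun m _ => match m with O => c | _ => 0 end).
Proof. intros m Hm s Hs. destruct m; apply dpl_const. Qed.

Lemma jet_nth J (D : nat -> R -> R) (f : R -> R) : jet J D ->
  (forall s, lo < s < hi -> f s = D O s) ->
  forall m, (m <= J)%nat -> forall s, lo < s < hi -> is_nth_deriv m f s (D m s).
Proof.
  intros HJ Hf m. induction m; intros Hm s Hs; simpl.
  - symmetry; auto.
  - destruct (U_nbhd s Hs) as [del [Hd Hy]]. exists del; split; auto.
    exists (D m); split.
    + intros t Ht. apply IHm; [lia| auto].
    + apply HJ; auto; lia.
Qed.

End BndSec.

End MB.
Import MB.

Module MC.

Definition lim_seq (u : nat -> R) : R := epsilon (inhabits 0) (fun l => Un_cv u l).
Definition ser (a : nat -> R) : R := lim_seq (fun N => fsum a N).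

Lemma lim_seq_spec u l : Un_cv u l -> lim_seq u = l.
Proof.
  intros H. unfold lim_seq. apply (UL_sequence u); auto.
  apply (epsilon_spec (inhabits 0) (fun l => Un_cv u l)). exists l; auto.
Qed.

Lemma fsum_geom s L : fsum (fun j => s ^ j) L * (1 - s) = 1 - s ^ L.
Proof. induction L; simpl; [ring|]. rewrite Rmult_plus_distr_r, IHL. ring. Qed.

Lemma pow_small s : 0 <= s < 1 -> forall eps, 0 < eps -> exists N, forall n, (N <= n)%nat -> s ^ n < eps.
Proof.
  intros Hs eps He. destruct (pow_lt_1_zero s) with (y := eps) as [N HN]; auto.
  - rewrite Rabs_right; lra.
  - exists N; intros n Hn. specialize (HN n Hn). rewrite Rabs_right in HN; auto.
    apply Rle_ge, pow_le; lra.
Qed.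

Lemma geom_tail (a : nat -> R) s K : 0 <= s < 1 -> (forall n, Rabs (a n) <= K * s ^ n) ->
  forall n m, (n <= m)%nat -> Rabs (fsum a m - fsum a n) <= K * s ^ n / (1 - s).
Proof.
  intros Hs Ha n m Hnm.
  replace m with (n + (m - n))%nat by lia. rewrite fsum_split.
  replace (fsum a n + fsum (fun j => a (n + j)%nat) (m - n) - fsum a n)
    with (fsum (fun j => a (n + j)%nat) (m - n)) by ring.
  eapply Rle_trans; [apply fsum_abs|].
  apply Rle_trans with (fsum (fun j => K * s ^ n * s ^ j) (m - n)).
  - apply fsum_le; intros j _. rewrite Rmult_assoc, <- pow_add. auto.
  - rewrite (fsum_scal (K * s ^ n) (fun j => s ^ j)). unfold Rdiv. apply Rmult_le_compat_l.
    + assert (0 <= K). { specialize (Ha O). simpl in Ha. assert (0 <= Rabs (a O)) by apply Rabs_pos. lra. }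
      apply Rmult_le_pos; auto. apply pow_le; lra.
    + assert (H := fsum_geom s (m - n)).
      assert (0 <= s ^ (m - n)) by (apply pow_le; lra).
      apply Rmult_le_reg_r with (1 - s); [lra|]. rewrite H, Rinv_l; lra.
Qed.

Lemma ser_spec (a : nat -> R) s K : 0 <= s < 1 -> (forall n, Rabs (a n) <= K * s ^ n) ->
  Un_cv (fun N => fsum a N) (ser a) /\ forall N, Rabs (ser a - fsum a N) <= K * s ^ N / (1 - s).
Proof.
  intros Hs Ha.
  assert (HK : 0 <= K). { specialize (Ha O). simpl in Ha. assert (0 <= Rabs (a O)) by apply Rabs_pos. lra. }
  assert (Hc : Cauchy_crit (fun N => fsum a N)).
  { intros eps He.
    destruct (pow_small s Hs (eps * (1 - s) / (2 * (K + 1)))) as [N HN].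
    { apply Rmult_lt_0_compat; [apply Rmult_lt_0_compat; lra| apply Rinv_0_lt_compat; lra]. }
    exists N. intros n m Hn Hm. unfold Rdist.
    assert (H1 := geom_tail a s K Hs Ha N n Hn).
    assert (H2 := geom_tail a s K Hs Ha N m Hm).
    assert (HsN := HN N (le_n N)).
    assert (B : K * s ^ N / (1 - s) < eps / 2).
    { unfold Rdiv. apply Rmult_lt_reg_r with (1 - s); [lra|].
      rewrite Rmult_assoc, Rinv_l by lra. rewrite Rmult_1_r.
      assert (0 <= s ^ N) by (apply pow_le; lra).
      apply Rle_lt_trans with ((K + 1) * s ^ N); [nra|].
      apply Rmult_lt_reg_l with (/ (K + 1)); [apply Rinv_0_lt_compat; lra|].
      rewrite <- Rmult_assoc, Rinv_l, Rmult_1_l by lra.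
      apply Rlt_le_trans with (eps * (1 - s) / (2 * (K + 1))); [lra| right; field; lra]. }
    replace (fsum a n - fsum a m) with ((fsum a n - fsum a N) - (fsum a m - fsum a N)) by ring.
    eapply Rle_lt_trans; [apply Rabs_triang|]. rewrite Rabs_Ropp. lra. }
  destruct (R_complete _ Hc) as [l Hl].
  unfold ser; rewrite (lim_seq_spec _ l Hl). split; auto.
  intros N. apply Rnot_lt_le; intros Hlt.
  destruct (Hl (Rabs (l - fsum a N) - K * s ^ N / (1 - s))) as [M HM]; [lra|].
  specialize (HM (max M N) (Nat.le_max_l _ _)). unfold Rdist in HM.
  assert (H1 := geom_tail a s K Hs Ha N (max M N) (Nat.le_max_r _ _)).
  assert (Rabs (l - fsum a N) <= Rabs (fsum a (max M N) - l) + Rabs (fsum a (max M N) - fsum a N)).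
  { replace (l - fsum a N) with (- (fsum a (max M N) - l) + (fsum a (max M N) - fsum a N)) by ring.
    eapply Rle_trans; [apply Rabs_triang|]. rewrite Rabs_Ropp; lra. }
  lra.
Qed.

Section SerSec.
Variables lo hi : R.
Hypothesis Hlohi : lo < hi.

Lemma ser_jet J (D : nat -> nat -> R -> R) s K :
  0 <= s < 1 -> (forall n, jet lo hi J (fun m => D m n)) ->
  (forall m n x, (m <= J)%nat -> lo < x < hi -> Rabs (D m n x) <= K * s ^ n) ->
  jet lo hi (pred J) (fun m x => ser (fun n => D m n x)).
Proof.
  intros Hs HJ HB m Hm x Hx.
  assert (Hr : 0 < Rmin (x - lo) (hi - x)) by (apply Rmin_pos; lra).
  set (rr := mkposreal _ Hr).
  assert (HBo : forall y, Boule x rr y -> lo < y < hi).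
  { intros y Hy. unfold Boule in Hy; simpl in Hy.
    assert (H1 := Rmin_l (x - lo) (hi - x)). assert (H2 := Rmin_r (x - lo) (hi - x)).
    apply Rabs_def2 in Hy. lra. }
  assert (Hcvu : forall m', (m' <= J)%nat -> CVU (fun N y => fsum (fun n => D m' n y) N)
                         (fun y => ser (fun n => D m' n y)) x rr).
  { intros m' Hm' eps He.
    destruct (pow_small s Hs (eps * (1 - s) / (K + 1))) as [N HN].
    { apply Rmult_lt_0_compat; [apply Rmult_lt_0_compat; lra| apply Rinv_0_lt_compat].
      specialize (HB m' O x Hm' Hx). simpl in HB. assert (0 <= Rabs (D m' O x)) by apply Rabs_pos. lra. }
    exists N. intros n y Hn Hy.
    assert (Hy' := HBo y Hy).
    assert (HK : 0 <= K). { specialize (HB m' O y Hm' Hy'). simpl in HB. assert (0 <= Rabs (D m' O y)) by apply Rabs_pos. lra. }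
    destruct (ser_spec (fun n => D m' n y) s K Hs) as [_ Ht].
    { intros; apply HB; auto. }
    eapply Rle_lt_trans; [apply Ht|].
    assert (0 <= s ^ n) by (apply pow_le; lra).
    specialize (HN n Hn).
    unfold Rdiv. apply Rmult_lt_reg_r with (1 - s); [lra|].
    rewrite Rmult_assoc, Rinv_l by lra. rewrite Rmult_1_r.
    apply Rle_lt_trans with ((K + 1) * s ^ n); [nra|].
    apply Rmult_lt_reg_l with (/ (K + 1)); [apply Rinv_0_lt_compat; lra|].
    rewrite <- Rmult_assoc, Rinv_l, Rmult_1_l by lra.
    apply Rlt_le_trans with (eps * (1 - s) / (K + 1)); [lra| right; field; lra]. }
  apply (derivable_pt_lim_CVU (fun N y => fsum (fun n => D m n y) N)
           (fun N y => fsum (fun n => D (S m) n y) N) (fun y => ser (fun n => D m n y))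
           (fun y => ser (fun n => D (S m) n y)) x x rr).
  - apply Boule_center.
  - intros y N Hy. apply (dpl_fsum (fun n => D m n) (fun n => D (S m) n)).
    intros j _. apply HJ; auto; lia.
  - intros y Hy. destruct (ser_spec (fun n => D m n y) s K Hs) as [H _]; auto.
    intros; apply HB; auto; lia.
  - apply Hcvu; lia.
  - intros y Hy. apply (CVU_continuity (fun N y => fsum (fun n => D (S m) n y) N) (fun y => ser (fun n => D (S m) n y)) x rr); auto; [apply Hcvu; lia|].
    intros N z Hz. apply derivable_continuous_pt.
    exists (fsum (fun n => D (S (S m)) n z) N).
    apply (dpl_fsum (fun n => D (S m) n) (fun n => D (S (S m)) n)).
    intros j _. apply HJ; auto; lia.
Qed.

End SerSec.

End MC.
Import MC.

Module MD.

Lemma cont_pt_eps f x : continuity_pt f x <->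
  forall eps, 0 < eps -> exists del, 0 < del /\ forall y, Rabs (y - x) < del -> Rabs (f y - f x) < eps.
Proof.
  unfold continuity_pt, continue_in, limit1_in, limit_in, D_x, no_cond; simpl; unfold R_dist.
  split.
  - intros H eps He. destruct (H eps He) as [del [Hd Hy]]. exists del; split; [lra|].
    intros y Hy'. destruct (Req_dec y x) as [->|Hne].
    + replace (f x - f x) with 0 by ring. rewrite Rabs_R0; lra.
    + apply Hy; auto.
  - intros H eps He. destruct (H eps He) as [del [Hd Hy]]. exists del; split; [lra|].
    intros y [_ Hy']. apply Hy; auto.
Qed.

Lemma dpl_carath (f phi : R -> R) x :
  (exists del, 0 < del /\ forall y, Rabs (y - x) < del -> f y - f x = (y - x) * phi y) ->
  continuity_pt phi x -> derivable_pt_lim f x (phi x).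
Proof.
  intros [del [Hd Heq]] Hc eps He.
  destruct (proj1 (cont_pt_eps phi x) Hc eps He) as [d2 [Hd2 H2]].
  assert (Hm : 0 < Rmin del d2) by (apply Rmin_pos; lra).
  exists (mkposreal _ Hm); simpl. intros h Hh Hlt.
  assert (Hl1 := Rmin_l del d2). assert (Hl2 := Rmin_r del d2).
  rewrite Heq by (replace (x + h - x) with h by ring; lra).
  replace ((x + h - x) * phi (x + h) / h - phi x) with (phi (x + h) - phi x) by (field; auto).
  apply H2. replace (x + h - x) with h by ring. lra.
Qed.

Lemma dpl_cont (f : R -> R) x l : derivable_pt_lim f x l -> continuity_pt f x.
Proof. intros H. apply derivable_continuous_pt. exists l; auto. Qed.

Lemma fsum_ge_term f n j : (forall i, (i < n)%nat -> 0 <= f i) -> (j < n)%nat -> f j <= fsum f n.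
Proof.
  induction n; intros H Hj; [lia|]. simpl.
  destruct (Nat.eq_dec j n) as [->|Hne].
  - assert (0 <= fsum f n) by (apply fsum_nonneg; intros; apply H; lia). lra.
  - assert (f j <= fsum f n) by (apply IHn; [intros; apply H; lia| lia]).
    assert (0 <= f n) by (apply H; lia). lra.
Qed.

Lemma fsum_ge_two f n i j : (forall k, (k < n)%nat -> 0 <= f k) -> (i < n)%nat -> (j < n)%nat -> i <> j ->
  f i + f j <= fsum f n.
Proof.
  induction n; intros H Hi Hj Hij; [lia|]. simpl.
  destruct (Nat.eq_dec j n) as [->|Hne].
  - assert (f i <= fsum f n) by (apply fsum_ge_term; [intros; apply H; lia| lia]). lra.
  - destruct (Nat.eq_dec i n) as [->|Hne'].
    + assert (f j <= fsum f n) by (apply fsum_ge_term; [intros; apply H; lia| lia]). lra.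
    + assert (f i + f j <= fsum f n) by (apply IHn; auto; try lia; intros; apply H; lia).
      assert (0 <= f n) by (apply H; lia). lra.
Qed.

Lemma fsum_zero n : fsum (fun _ => 0) n = 0.
Proof. induction n; simpl; [ring| rewrite IHn; ring]. Qed.

Lemma fsum_indic (F : nat -> R) k N : (k < N)%nat ->
  fsum (fun j => if Nat.eqb k j then F j else 0) N = F k.
Proof.
  induction N; intros Hk; [lia|]. simpl.
  destruct (Nat.eqb_spec k N) as [->|Hne].
  - rewrite (fsum_ext _ (fun _ => 0)).
    + rewrite fsum_zero; ring.
    + intros j Hj. destruct (Nat.eqb_spec N j); [lia| auto].
  - rewrite IHN by lia. ring.
Qed.

Definition Gp (x y : R) (j : nat) : R := fsum (fun i => x ^ i * y ^ (j - 1 - i)) j.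

Lemma Gp_S x y j : Gp x y (S j) = y * Gp x y j + x ^ j.
Proof.
  unfold Gp. simpl. rewrite <- fsum_scal. f_equal.
  - apply fsum_ext. intros i Hi. replace (j - 0 - i)%nat with (S (j - 1 - i)) by lia. simpl; ring.
  - replace (j - 0 - j)%nat with O by lia. simpl; ring.
Qed.

Lemma pow_diff x y j : x ^ j - y ^ j = (x - y) * Gp x y j.
Proof.
  induction j.
  - unfold Gp; simpl; ring.
  - rewrite Gp_S. simpl. replace (x * x ^ j - y * y ^ j) with (y * (x ^ j - y ^ j) + (x - y) * x ^ j) by ring.
    rewrite IHj. ring.
Qed.

Lemma fold_nat_fsum (a : nat -> nat) n :
  INR (fold_right Nat.add 0%nat (map a (seq 0 n))) = fsum (fun j => INR (a j)) n.
Proof.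
  assert (Hc : forall l c, fold_right Nat.add c l = (fold_right Nat.add 0 l + c)%nat).
  { induction l; simpl; intros; [auto| rewrite IHl; lia]. }
  induction n; [simpl; auto|].
  rewrite seq_S, map_app, fold_right_app. simpl. rewrite Hc, plus_INR, IHn. simpl. rewrite Nat.add_0_r. auto.
Qed.

Lemma fold_R_fsum (f : nat -> R) n :
  fold_right Rplus 0 (map f (seq 0 n)) = fsum f n.
Proof.
  assert (Hc : forall l c, fold_right Rplus c l = fold_right Rplus 0 l + c).
  { induction l; simpl; intros; [ring| rewrite IHl; ring]. }
  induction n; [simpl; auto|].
  rewrite seq_S, map_app, fold_right_app. simpl. rewrite Hc, IHn. ring.
Qed.

Lemma tau_count_S r tau j : tau_count (S r) tau j = (tau_count r tau j + if Nat.eqb (tau r) j then 1 else 0)%nat.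
Proof.
  unfold tau_count. rewrite seq_S, filter_app, length_app. simpl.
  destruct (Nat.eqb (tau r) j); simpl; lia.
Qed.

Lemma count_fsum (tau : nat -> nat) (F : nat -> R) d n :
  (forall b, (b < n)%nat -> (tau b <= d)%nat) ->
  fsum (fun b => F (tau b)) n = fsum (fun j => INR (tau_count n tau j) * F j) (S d).
Proof.
  induction n; intros H.
  - simpl. rewrite (fsum_ext _ (fun _ => 0)); [rewrite fsum_zero; ring|]. intros; unfold tau_count; simpl; ring.
  - simpl (fsum (fun b => F (tau b)) (S n)). rewrite IHn by (intros; apply H; lia).
    rewrite (fsum_ext (fun j => INR (tau_count (S n) tau j) * F j)
               (fun j => INR (tau_count n tau j) * F j + (if Nat.eqb (tau n) j then F j else 0))).
    + rewrite fsum_plus, fsum_indic; [auto|]. specialize (H n). lia.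
    + intros j _. rewrite tau_count_S, plus_INR. destruct (Nat.eqb (tau n) j); simpl; ring.
Qed.

End MD.
Import MD.

Module ME.

Lemma cont_mult f g x : continuity_pt f x -> continuity_pt g x -> continuity_pt (fun y => f y * g y) x.
Proof. intros; apply (continuity_pt_mult f g); auto. Qed.
Lemma cont_plus f g x : continuity_pt f x -> continuity_pt g x -> continuity_pt (fun y => f y + g y) x.
Proof. intros; apply (continuity_pt_plus f g); auto. Qed.
Lemma cont_const c x : continuity_pt (fun _ => c) x.
Proof. apply continuity_pt_const. intros a b; auto. Qed.
Lemma cont_inv f x : continuity_pt f x -> f x <> 0 -> continuity_pt (fun y => / f y) x.
Proof. intros; apply (continuity_pt_inv f); auto. Qed.
Lemma cont_comp f g x : continuity_pt f x -> continuity_pt g (f x) -> continuity_pt (fun y => g (f y)) x.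
Proof. intros; apply (continuity_pt_comp f g); auto. Qed.
Lemma cont_pow_c c i x : continuity_pt (fun z => z ^ i * c) x.
Proof.
  apply cont_mult; [|apply cont_const]. apply dpl_cont with (INR i * x ^ pred i).
  apply derivable_pt_lim_pow.
Qed.
Lemma cont_fsum (F : nat -> R -> R) n x : (forall j, (j < n)%nat -> continuity_pt (F j) x) ->
  continuity_pt (fun z => fsum (fun j => F j z) n) x.
Proof.
  induction n; intros H; simpl; [apply cont_const|].
  apply cont_plus; [apply IHn; intros; apply H; lia| apply H; lia].
Qed.

Lemma fsum_at0 (c : nat -> R) n : fsum (fun j => c j * 0 ^ j) (S n) = c O.
Proof. induction n; [simpl; ring|]. change (fsum (fun j => c j * 0 ^ j) (S n) + c (S n) * 0 ^ (S n) = c O). rewrite IHn. simpl; ring. Qed.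

Lemma pow_le1 s n : 0 <= s <= 1 -> s ^ n <= 1.
Proof. intros H. rewrite <- (pow1 n). apply pow_incr; lra. Qed.

Section Prob.
Variables (d : nat) (a tau : nat -> nat).
Hypothesis hd : (1 <= d)%nat.
Hypothesis ha : forall j, (j <= d)%nat -> (1 <= a j)%nat.
Hypothesis htau_range : forall b, (b < rr d a)%nat -> (tau b <= d)%nat.
Hypothesis htau_count : forall j, (j <= d)%nat -> tau_count (rr d a) tau j = a j.

Definition pol (x : R) := fsum (fun j => INR (a j) * x ^ j) (S d).
Definition Qp (x y : R) := fsum (fun j => INR (a j) * Gp x y j) (S d).

Lemma a_ge1 j : (j <= d)%nat -> 1 <= INR (a j).
Proof. intros H. apply (le_INR 1). auto. Qed.

Lemma pol_diff x y : pol x - pol y = (x - y) * Qp x y.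
Proof.
  unfold pol, Qp. rewrite <- fsum_scal.
  replace (fsum (fun j => INR (a j) * x ^ j) (S d) - fsum (fun j => INR (a j) * y ^ j) (S d))
    with (fsum (fun j => INR (a j) * x ^ j + (-1) * (INR (a j) * y ^ j)) (S d))
    by (rewrite fsum_plus, fsum_scal; ring).
  apply fsum_ext. intros j _. replace ((x - y) * (INR (a j) * Gp x y j)) with (INR (a j) * ((x - y) * Gp x y j)) by ring. rewrite <- (pow_diff x y j). ring.
Qed.

Lemma Gp_nonneg x y j : 0 <= x -> 0 <= y -> 0 <= Gp x y j.
Proof. intros. unfold Gp. apply fsum_nonneg. intros. apply Rmult_le_pos; apply pow_le; auto. Qed.

Lemma Qp_ge1 x y : 0 <= x -> 0 <= y -> 1 <= Qp x y.
Proof.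
  intros Hx Hy. unfold Qp.
  apply Rle_trans with (INR (a 1) * Gp x y 1).
  - unfold Gp; simpl. assert (1 <= INR (a 1)) by (apply a_ge1; lia). lra.
  - apply (fsum_ge_term (fun j => INR (a j) * Gp x y j)); [|lia].
    intros; apply Rmult_le_pos; [apply pos_INR| apply Gp_nonneg; auto].
Qed.

Lemma r_INR : INR (rr d a) = fsum (fun j => INR (a j)) (S d).
Proof. unfold rr. apply fold_nat_fsum. Qed.

Lemma r_ge2 : (2 <= rr d a)%nat.
Proof.
  apply INR_le. replace (INR 2) with 2 by (simpl; ring). rewrite r_INR.
  apply Rle_trans with (INR (a O) + INR (a d)).
  - assert (1 <= INR (a O)) by (apply a_ge1; lia). assert (1 <= INR (a d)) by (apply a_ge1; lia). lra.
  - apply (fsum_ge_two (fun j => INR (a j))); try lia. intros; apply pos_INR.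
Qed.

Lemma a0_pos : 1 <= INR (a O).
Proof. apply a_ge1; lia. Qed.

Definition Phi (s t : R) := sum_f_R0 (fun j => INR (a j) * s ^ (d - j) * t ^ j) d - s ^ (d - 1).

Lemma Phi_cont s : continuity (Phi s).
Proof.
  intros t.
  assert (E : Phi s = (fun z => fsum (fun j => z ^ j * (INR (a j) * s ^ (d - j))) (S d) + (fun _ => - s ^ (d - 1)) z)).
  { apply functional_extensionality. intros z. unfold Phi. rewrite fsum_sum_f_R0.
    rewrite (fsum_ext _ (fun j => z ^ j * (INR (a j) * s ^ (d - j)))); [ring|]. intros; ring. }
  rewrite E. apply cont_plus; [|apply cont_const].
  apply (cont_fsum (fun j z => z ^ j * (INR (a j) * s ^ (d - j)))). intros; apply cont_pow_c.
Qed.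

Lemma teq_exists s : 0 < s < 1 / INR (a O) -> exists t, t_eq d a s t.
Proof.
  intros Hs.
  assert (Ha0 := a0_pos).
  assert (Has : INR (a O) * s < 1).
  { destruct Hs as [_ Hs]. unfold Rdiv in Hs. rewrite Rmult_1_l in Hs.
    apply Rmult_lt_reg_l with (/ INR (a O)); [apply Rinv_0_lt_compat; lra|].
    rewrite <- Rmult_assoc, Rinv_l, Rmult_1_l, Rmult_1_r by lra. auto. }
  assert (Hs1 : s < 1) by nra.
  assert (Hpd : 0 < s ^ (d - 1)) by (apply pow_lt; lra).
  assert (Hsd : s ^ d = s * s ^ (d - 1)) by (replace d with (S (d - 1)) at 1 by lia; auto).
  assert (H0 : Phi s 0 < 0).
  { unfold Phi. rewrite fsum_sum_f_R0, fsum_at0. simpl. rewrite Nat.sub_0_r, Hsd. nra. }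
  assert (H1 : 0 < Phi s 1).
  { unfold Phi. rewrite fsum_sum_f_R0.
    assert (HH : INR (a O) * s ^ (d - 0) * 1 ^ 0 + INR (a d) * s ^ (d - d) * 1 ^ d <=
                 fsum (fun j => INR (a j) * s ^ (d - j) * 1 ^ j) (S d)).
    { apply (fsum_ge_two (fun j => INR (a j) * s ^ (d - j) * 1 ^ j)); try lia.
      intros; apply Rmult_le_pos; [apply Rmult_le_pos; [apply pos_INR| apply pow_le; lra]| rewrite pow1; lra]. }
    rewrite Nat.sub_diag, !pow1, Nat.sub_0_r, pow_O in HH.
    assert (1 <= INR (a d)) by (apply a_ge1; lia).
    assert (s ^ (d - 1) <= 1) by (apply pow_le1; lra).
    assert (0 < s ^ d) by (apply pow_lt; lra). nra. }
  destruct (IVT_cor (Phi s) 0 1 (Phi_cont s)) as [z [Hz HPz]]; [lra| nra|].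
  exists z. unfold t_eq. split.
  - split.
    + destruct (Req_dec z 0) as [E|E]; [rewrite E in HPz; lra| lra].
    + destruct (Req_dec z 1) as [E|E]; [rewrite E in HPz; lra| lra].
  - unfold Phi in HPz. lra.
Qed.

Lemma tq_spec s : 0 < s < 1 / INR (a O) -> t_eq d a s (tq d a s).
Proof.
  intros Hs. unfold tq. apply (epsilon_spec (inhabits 0) (fun t => t_eq d a s t)). apply teq_exists; auto.
Qed.

Definition uu (s : R) := tq d a s / s.

Lemma uu_pos s : 0 < s < 1 / INR (a O) -> 0 < uu s.
Proof.
  intros Hs. destruct (tq_spec s Hs) as [[Ht _] _]. unfold uu. apply Rdiv_lt_0_compat; lra.
Qed.

Lemma uu_pol s : 0 < s < 1 / INR (a O) -> pol (uu s) = / s.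
Proof.
  intros Hs. destruct (tq_spec s Hs) as [_ Heq].
  assert (Ht : tq d a s = s * uu s) by (unfold uu; field; lra).
  rewrite Ht in Heq. rewrite fsum_sum_f_R0 in Heq.
  rewrite (fsum_ext _ (fun j => s ^ d * (INR (a j) * uu s ^ j))) in Heq.
  - rewrite fsum_scal in Heq. fold (pol (uu s)) in Heq.
    assert (Hsd : s ^ d = s * s ^ (d - 1)) by (replace d with (S (d - 1)) at 1 by lia; auto).
    assert (0 < s ^ (d - 1)) by (apply pow_lt; lra).
    rewrite Hsd in Heq. apply Rmult_eq_reg_l with (s * s ^ (d - 1)); [|apply Rmult_integral_contrapositive; split; lra].
    rewrite Heq. field. lra.
  - intros j Hj. rewrite Rpow_mult_distr.
    replace (s ^ d) with (s ^ (d - j) * s ^ j) by (rewrite <- pow_add; f_equal; lia). ring.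
Qed.

Lemma piq_eq s b : 0 < s < 1 / INR (a O) -> piq d a tau s b = s * uu s ^ tau b.
Proof.
  intros Hs. unfold piq. assert (Ht : tq d a s = s * uu s) by (unfold uu; field; lra).
  rewrite Ht, Rpow_mult_distr. field. apply pow_nonzero; lra.
Qed.

Lemma uu_le s : 0 < s < 1 / INR (a O) -> uu s <= / s.
Proof.
  intros Hs. rewrite <- uu_pol by auto. assert (Hu := uu_pos s Hs). unfold pol.
  apply Rle_trans with (INR (a 1) * uu s ^ 1).
  - simpl. assert (1 <= INR (a 1)) by (apply a_ge1; lia). nra.
  - apply (fsum_ge_term (fun j => INR (a j) * uu s ^ j)); [|lia].
    intros; apply Rmult_le_pos; [apply pos_INR| apply pow_le; lra].
Qed.

Lemma uu_lower s : 0 < s < 1 / INR (a O) -> Rmin 1 ((/ s - INR (a O)) / INR (rr d a)) <= uu s.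
Proof.
  intros Hs. assert (Hu := uu_pos s Hs).
  destruct (Rle_lt_dec 1 (uu s)) as [H1|H1]; [apply Rle_trans with 1; [apply Rmin_l| auto]|].
  apply Rle_trans with ((/ s - INR (a O)) / INR (rr d a)); [apply Rmin_r|].
  assert (Hr : 0 < INR (rr d a)) by (apply lt_0_INR; assert (H := r_ge2); lia).
  apply Rmult_le_reg_r with (INR (rr d a)); auto. unfold Rdiv. rewrite Rmult_assoc, Rinv_l, Rmult_1_r by lra.
  rewrite <- uu_pol by auto. unfold pol. rewrite r_INR.
  rewrite <- fsum_scal.
  apply Rle_trans with (fsum (fun j => (if Nat.eqb O j then INR (a j) else 0) + uu s * INR (a j)) (S d) - INR (a O)).
  - apply Rplus_le_compat_r. apply fsum_le. intros j Hj.
    destruct j; simpl.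
    + assert (0 <= INR (a O)) by apply pos_INR. nra.
    + assert (uu s ^ j <= 1) by (apply pow_le1; lra). assert (0 <= INR (a (S j))) by apply pos_INR.
      assert (0 <= uu s ^ j) by (apply pow_le; lra). assert (uu s * uu s ^ j <= uu s) by nra. rewrite Rplus_0_l, (Rmult_comm (uu s) (INR _)). apply Rmult_le_compat_l; auto.
  - rewrite fsum_plus, (fsum_indic (fun j => INR (a j))) by lia. lra.
Qed.

Lemma dom_mono s : 0 < s < 1 / INR (a O) -> s <> 0.
Proof. intros; lra. Qed.

Lemma uu_diff y s : 0 < y < 1 / INR (a O) -> 0 < s < 1 / INR (a O) ->
  uu y - uu s = (/ y - / s) / Qp (uu y) (uu s).
Proof.
  intros Hy Hs. assert (Hq := Qp_ge1 (uu y) (uu s) (Rlt_le _ _ (uu_pos y Hy)) (Rlt_le _ _ (uu_pos s Hs))).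
  rewrite <- (uu_pol y Hy), <- (uu_pol s Hs), pol_diff. field. lra.
Qed.

Lemma uu_cont s : 0 < s < 1 / INR (a O) -> continuity_pt uu s.
Proof.
  intros Hs. apply cont_pt_eps. intros eps He.
  exists (Rmin (s / 2) (Rmin (eps * s * s / 2) (1 / INR (a O) - s))). split.
  { apply Rmin_pos; [lra| apply Rmin_pos; [|lra]]. apply Rmult_lt_0_compat; [|lra]. apply Rmult_lt_0_compat; [|lra]. apply Rmult_lt_0_compat; lra. }
  intros y Hy.
  assert (H1 := Rmin_l (s / 2) (Rmin (eps * s * s / 2) (1 / INR (a O) - s))).
  assert (H2 := Rmin_r (s / 2) (Rmin (eps * s * s / 2) (1 / INR (a O) - s))).
  assert (H3 := Rmin_l (eps * s * s / 2) (1 / INR (a O) - s)).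
  assert (H4 := Rmin_r (eps * s * s / 2) (1 / INR (a O) - s)).
  assert (Hy' := Hy). apply Rabs_def2 in Hy'.
  assert (Hyd : 0 < y < 1 / INR (a O)) by lra.
  rewrite uu_diff by auto.
  assert (Hq := Qp_ge1 (uu y) (uu s) (Rlt_le _ _ (uu_pos y Hyd)) (Rlt_le _ _ (uu_pos s Hs))).
  unfold Rdiv. rewrite Rabs_mult, Rabs_inv, (Rabs_right (Qp _ _)) by lra.
  apply Rle_lt_trans with (Rabs (/ y - / s)).
  { assert (0 <= Rabs (/ y - / s)) by apply Rabs_pos.
    assert (/ Qp (uu y) (uu s) <= 1) by (rewrite <- Rinv_1; apply Rinv_le_contravar; lra).
    assert (0 < / Qp (uu y) (uu s)) by (apply Rinv_0_lt_compat; lra). nra. }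
  replace (/ y - / s) with ((s - y) / (s * y)) by (field; lra).
  unfold Rdiv. rewrite Rabs_mult, Rabs_inv, (Rabs_right (s * y)) by nra.
  rewrite <- Rabs_Ropp. replace (- (s - y)) with (y - s) by ring.
  apply Rmult_lt_reg_r with (s * y); [nra|]. rewrite Rmult_assoc, Rinv_l, Rmult_1_r by nra.
  apply Rlt_le_trans with (eps * s * s / 2); [lra|].
  assert (0 < eps * s) by nra. nra.
Qed.

Lemma cont_id x : continuity_pt (fun y => y) x.
Proof. apply dpl_cont with 1. apply dpl_id. Qed.

Lemma Qp_cont1 c z : continuity_pt (fun z => Qp z c) z.
Proof.
  unfold Qp. apply (cont_fsum (fun j z => INR (a j) * Gp z c j)). intros j _.
  apply (cont_mult (fun _ => INR (a j))); [apply cont_const|].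
  unfold Gp. apply (cont_fsum (fun i z => z ^ i * c ^ (j - 1 - i))). intros; apply cont_pow_c.
Qed.

Lemma uu_deriv s : 0 < s < 1 / INR (a O) ->
  derivable_pt_lim uu s ((-1) * / (s * s) * / Qp (uu s) (uu s)).
Proof.
  intros Hs.
  apply (dpl_carath uu (fun y => (-1) * / (s * y) * / Qp (uu y) (uu s))).
  - exists (Rmin s (1 / INR (a O) - s)); split; [apply Rmin_pos; lra|].
    intros y Hy. assert (H1 := Rmin_l s (1 / INR (a O) - s)). assert (H2 := Rmin_r s (1 / INR (a O) - s)).
    apply Rabs_def2 in Hy. assert (Hyd : 0 < y < 1 / INR (a O)) by lra.
    assert (Hq := Qp_ge1 (uu y) (uu s) (Rlt_le _ _ (uu_pos y Hyd)) (Rlt_le _ _ (uu_pos s Hs))).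
    rewrite uu_diff by auto. field. repeat split; lra.
  - apply cont_mult.
    + apply (cont_mult (fun _ => -1)); [apply cont_const|]. apply cont_inv.
      * apply (cont_mult (fun _ => s)); [apply cont_const| apply cont_id].
      * apply Rmult_integral_contrapositive; split; lra.
    + apply cont_inv.
      * apply (cont_comp uu (fun z => Qp z (uu s))); [apply uu_cont; auto| apply Qp_cont1].
      * assert (Hq := Qp_ge1 (uu s) (uu s) (Rlt_le _ _ (uu_pos s Hs)) (Rlt_le _ _ (uu_pos s Hs))). lra.
Qed.

Section Loc.
Variables lo hi : R.
Hypothesis Hlo : 0 < lo.
Hypothesis Hlohi : lo < hi.
Hypothesis Hhi : hi < 1 / INR (a O).

Lemma inU s : lo < s < hi -> 0 < s < 1 / INR (a O).
Proof. intros; lra. Qed.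

Lemma B_mult1 {I} J (f g : I -> R -> R) :
  Bnd lo hi J f (fun _ => 1) -> Bnd lo hi J g (fun _ => 1) -> Bnd lo hi J (fun i s => f i s * g i s) (fun _ => 1).
Proof.
  intros Hf Hg. apply (B_weight lo hi J _ (fun _ => 1 * 1) _ 1); [intros; lra| intros; lra|].
  apply B_mult; auto; intros; lra.
Qed.

Lemma B_c1 {I} J (c : R) : Bnd lo hi J (fun (_ : I) _ => c) (fun _ => 1).
Proof. apply B_const; [intros; lra|]. exists (Rabs c); intros; lra. Qed.

Lemma Qp_Bnd {I} J : Bnd lo hi J (fun (_ : I) s => uu s) (fun _ => 1) ->
  Bnd lo hi J (fun (_ : I) s => Qp (uu s) (uu s)) (fun _ => 1).
Proof.
  intros Hu. unfold Qp.
  apply (B_fsum lo hi J (fun j (_ : I) s => INR (a j) * Gp (uu s) (uu s) j)); [intros; lra|].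
  intros j _. apply (B_mult1 J (fun _ _ => INR (a j))); [apply B_c1|].
  unfold Gp. apply (B_fsum lo hi J (fun i (_ : I) s => uu s ^ i * uu s ^ (j - 1 - i))); [intros; lra|].
  intros i _. apply B_mult1.
  - apply (B_pow_fam lo hi J (fun _ s => uu s) (fun _ => i) i); auto.
  - apply (B_pow_fam lo hi J (fun _ s => uu s) (fun _ => (j - 1 - i)%nat) (j - 1 - i)); auto.
Qed.

Lemma uu_Bnd {I} J : Bnd lo hi J (fun (_ : I) s => uu s) (fun _ => 1).
Proof.
  assert (Hb : exists K, forall (i : I) s, lo < s < hi -> Rabs (uu s) <= K * 1).
  { exists (/ lo). intros i s Hs. rewrite Rmult_1_r. assert (Hd := inU s Hs).
    rewrite Rabs_right by (apply Rle_ge, Rlt_le, uu_pos; auto).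
    eapply Rle_trans; [apply uu_le; auto|]. apply Rinv_le_contravar; lra. }
  induction J.
  - split; auto.
  - split; auto. exists (fun _ s => (-1) * / (s * s) * / Qp (uu s) (uu s)). split.
    + intros i s Hs. apply uu_deriv, inU; auto.
    + apply B_mult1; [apply B_mult1; [apply B_c1|]|].
      * apply (B_inv lo hi J (fun _ s => s * s) (lo * lo)); [nra| |].
        -- intros i s Hs. rewrite Rabs_right by nra. nra.
        -- apply B_mult1; apply B_id; lra.
      * apply (B_inv lo hi J (fun _ s => Qp (uu s) (uu s)) 1); [lra| |].
        -- intros i s Hs. assert (Hd := inU s Hs).
           assert (Hq := Qp_ge1 (uu s) (uu s) (Rlt_le _ _ (uu_pos s Hd)) (Rlt_le _ _ (uu_pos s Hd))).
           rewrite Rabs_right; lra.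
        -- apply Qp_Bnd. auto.
Qed.

End Loc.
End Prob.

End ME.
Import ME.

Module MF.

Fixpoint lsum (f : nat -> R) (n : nat) : R :=
  match n with O => 0 | S m => lsum f m + f (S m) end.

Lemma bernoulli_lin l n : 1 < l -> INR n * (l - 1) <= l ^ n.
Proof.
  intros Hl. induction n; [simpl; lra|].
  rewrite S_INR. simpl (l ^ S n). assert (1 <= l ^ n) by (apply pow_R1_Rle; lra). nra.
Qed.

Lemma dpl_lsum (F F' : nat -> R -> R) n x :
  (forall j, derivable_pt_lim (F j) x (F' j x)) ->
  derivable_pt_lim (fun y => lsum (fun j => F j y) n) x (lsum (fun j => F' j x) n).
Proof.
  intros H. induction n; simpl; [apply dpl_const| apply dpl_plus; auto].
Qed.

Lemma lsum_abs f n K : (forall j, Rabs (f j) <= K) -> Rabs (lsum f n) <= INR n * K.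
Proof.
  intros H. induction n. simpl; rewrite Rabs_R0; lra.
  rewrite S_INR. simpl (lsum f (S n)). eapply Rle_trans; [apply Rabs_triang|]. specialize (H (S n)). lra.
Qed.

Section LB.
Variables lo hi : R.
Hypothesis Hlohi : lo < hi.

Lemma lsum_Bnd J (g : nat -> R -> R) l : 1 < l ->
  Bnd lo hi J g (fun _ => 1) ->
  Bnd lo hi J (fun (en : (nat -> nat) * nat) s => lsum (fun j => g (fst en j) s) (snd en)) (fun en => l ^ snd en).
Proof.
  intros Hl. revert g; induction J; intros g [[K HK] Hg]; split.
  1,3: exists (Rabs K / (l - 1)); intros [e n] s Hs; simpl;
    eapply Rle_trans; [apply (lsum_abs _ _ (Rabs K)); intros j; eapply Rle_trans; [apply HK; auto| rewrite Rmult_1_r; apply RRle_abs]|];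
    assert (H1 := bernoulli_lin l n Hl); assert (0 <= Rabs K) by apply Rabs_pos;
    unfold Rdiv; apply Rmult_le_reg_r with (l - 1); [lra|];
    replace (Rabs K * / (l - 1) * l ^ n * (l - 1)) with (Rabs K * l ^ n) by (field; lra); nra.
  - auto.
  - destruct Hg as [g' [Hg1 Hg2]]. exists (fun en s => lsum (fun j => g' (fst en j) s) (snd en)). split.
    + intros [e n] s Hs. simpl. apply (dpl_lsum (fun j => g (e j)) (fun j => g' (e j))). intros; auto.
    + apply IHJ; auto.
Qed.

End LB.

Section Fam.
Variables (d : nat) (a tau : nat -> nat).
Hypothesis hd : (1 <= d)%nat.
Hypothesis ha : forall j, (j <= d)%nat -> (1 <= a j)%nat.
Hypothesis htau_range : forall b, (b < rr d a)%nat -> (tau b <= d)%nat.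
Hypothesis htau_count : forall j, (j <= d)%nat -> tau_count (rr d a) tau j = a j.

Definition cl (b : nat) : nat := Nat.min b (rr d a - 1).
Definition pic (b : nat) (s : R) : R := piq d a tau s (cl b).
Definition ccf (b : nat) (s : R) : R := cq d a tau s (cl b).
Definition du (s : R) : R := (-1) * / (s * s) * / Qp d a (uu d a s) (uu d a s).
Definition pic' (b : nat) (s : R) : R :=
  1 * uu d a s ^ tau (cl b) + s * (INR (tau (cl b)) * uu d a s ^ pred (tau (cl b)) * du s).
Definition ell (b : nat) (s : R) : R := pic' b s * / pic b s.

Lemma cl_lt b : (cl b < rr d a)%nat.
Proof. unfold cl. assert (H := r_ge2 d a hd ha). lia. Qed.

Lemma cl_id b : (b < rr d a)%nat -> cl b = b.
Proof. unfold cl. lia. Qed.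

Lemma tau_cl b : (tau (cl b) <= d)%nat.
Proof. apply htau_range, cl_lt. Qed.

Lemma pic_eq b s : 0 < s < 1 / INR (a O) -> pic b s = s * uu d a s ^ tau (cl b).
Proof. intros; unfold pic; apply piq_eq; auto. Qed.

Lemma piq_sum s : 0 < s < 1 / INR (a O) -> fsum (fun b => piq d a tau s b) (rr d a) = 1.
Proof.
  intros Hs. rewrite (fsum_ext _ (fun b => (fun j => s * uu d a s ^ j) (tau b))) by (intros; apply piq_eq; auto).
  rewrite (count_fsum tau (fun j => s * uu d a s ^ j) d) by auto.
  rewrite (fsum_ext _ (fun j => s * (INR (a j) * uu d a s ^ j))).
  - rewrite fsum_scal. fold (pol d a (uu d a s)). rewrite uu_pol by auto. field; lra.
  - intros j Hj. rewrite htau_count by lia. ring.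
Qed.

Lemma cq_fsum s b : cq d a tau s b = fsum (fun j => piq d a tau s j) b.
Proof. unfold cq. apply fold_R_fsum. Qed.

Lemma pic_deriv b s : 0 < s < 1 / INR (a O) -> derivable_pt_lim (pic b) s (pic' b s).
Proof.
  intros Hs. apply (dpl_ext_loc (fun y => y * uu d a y ^ tau (cl b))).
  - exists (Rmin s (1 / INR (a O) - s)); split; [apply Rmin_pos; lra|].
    intros y Hy. assert (H1 := Rmin_l s (1 / INR (a O) - s)). assert (H2 := Rmin_r s (1 / INR (a O) - s)).
    apply Rabs_def2 in Hy. rewrite pic_eq; auto; lra.
  - unfold pic'. apply dpl_mult; [apply dpl_id|]. apply dpl_pow. apply uu_deriv; auto.
Qed.

Section Loc2.
Variables lo hi : R.
Hypothesis Hlo : 0 < lo.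
Hypothesis Hlohi : lo < hi.
Hypothesis Hhi : hi < 1 / INR (a O).

Lemma inU2 s : lo < s < hi -> 0 < s < 1 / INR (a O).
Proof. intros; lra. Qed.

Lemma du_Bnd {I} J : Bnd lo hi J (fun (_ : I) s => du s) (fun _ => 1).
Proof.
  unfold du. apply B_mult1; [apply B_mult1; [apply B_c1|]|].
  - apply (B_inv lo hi J (fun _ s => s * s) (lo * lo)); [nra| |].
    + intros i s Hs. rewrite Rabs_right by nra. nra.
    + apply B_mult1; apply B_id; lra.
  - apply (B_inv lo hi J (fun _ s => Qp d a (uu d a s) (uu d a s)) 1); [lra| |].
    + intros i s Hs. assert (Hd := inU2 s Hs).
      assert (Hq := Qp_ge1 d a hd ha (uu d a s) (uu d a s) (Rlt_le _ _ (uu_pos d a hd ha s Hd)) (Rlt_le _ _ (uu_pos d a hd ha s Hd))).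
      rewrite Rabs_right; lra.
    + apply Qp_Bnd; auto. apply uu_Bnd; auto.
Qed.

Lemma pic_Bnd J : Bnd lo hi J pic (fun _ => 1).
Proof.
  apply (B_ext lo hi J (fun b s => s * uu d a s ^ tau (cl b))).
  - intros b s Hs. symmetry; apply pic_eq, inU2; auto.
  - apply B_mult1; [apply B_id; lra|].
    apply (B_pow_fam lo hi J (fun _ s => uu d a s) (fun b => tau (cl b)) d); [intros; apply tau_cl|].
    apply uu_Bnd; auto.
Qed.

Lemma pic'_Bnd J : Bnd lo hi J pic' (fun _ => 1).
Proof.
  unfold pic'. apply B_plus.
  - apply B_mult1; [apply B_c1|].
    apply (B_pow_fam lo hi J (fun _ s => uu d a s) (fun b => tau (cl b)) d); [intros; apply tau_cl|].
    apply uu_Bnd; auto.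
  - apply B_mult1; [apply B_id; lra|]. apply B_mult1; [apply B_mult1|].
    + apply B_const; [intros; lra|]. exists (INR d). intros b. rewrite Rabs_right by (apply Rle_ge, pos_INR).
      rewrite Rmult_1_r. apply le_INR, tau_cl.
    + apply (B_pow_fam lo hi J (fun _ s => uu d a s) (fun b => pred (tau (cl b))) d); [intros; assert (H := tau_cl i); lia|].
      apply uu_Bnd; auto.
    + apply du_Bnd.
Qed.

Definition umin := Rmin 1 ((/ hi - INR (a O)) / INR (rr d a)).
Definition m0 := lo * umin ^ d.

Lemma umin_pos : 0 < umin.
Proof.
  unfold umin. apply Rmin_pos; [lra|].
  assert (Hr : 0 < INR (rr d a)) by (apply lt_0_INR; assert (H := r_ge2 d a hd ha); lia).
  apply Rdiv_lt_0_compat; auto.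
  assert (H0 : 1 <= INR (a O)) by (apply (le_INR 1); apply ha; lia).
  assert (Hhi' : hi * INR (a O) < 1).
  { unfold Rdiv in Hhi. rewrite Rmult_1_l in Hhi.
    apply Rmult_lt_reg_r with (/ INR (a O)); [apply Rinv_0_lt_compat; lra|].
    rewrite Rmult_assoc, Rinv_r, Rmult_1_r, Rmult_1_l by lra. auto. }
  apply Rmult_lt_reg_r with hi; [lra|]. rewrite Rmult_minus_distr_r, Rinv_l by lra. lra.
Qed.

Lemma m0_pos : 0 < m0.
Proof. unfold m0. apply Rmult_lt_0_compat; [lra| apply pow_lt, umin_pos]. Qed.

Lemma pic_lower b s : lo < s < hi -> m0 <= pic b s.
Proof.
  intros Hs. assert (Hd := inU2 s Hs). rewrite pic_eq by auto.
  assert (Hu : umin <= uu d a s).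
  { eapply Rle_trans; [|apply uu_lower; auto]. unfold umin.
    assert (Hr : 0 < INR (rr d a)) by (apply lt_0_INR; assert (H := r_ge2 d a hd ha); lia).
    assert (/ hi <= / s) by (apply Rinv_le_contravar; lra).
    destruct (Rle_dec 1 ((/ s - INR (a O)) / INR (rr d a))).
    - unfold Rmin at 2. destruct Rle_dec; [|lra]. apply Rmin_l.
    - rewrite (Rmin_right 1 ((/ s - INR (a O)) / INR (rr d a))) by lra.
      eapply Rle_trans; [apply Rmin_r|]. unfold Rdiv. apply Rmult_le_compat_r; [apply Rlt_le, Rinv_0_lt_compat; auto| lra]. }
  assert (Hum := umin_pos). assert (Hum1 : umin <= 1) by apply Rmin_l.
  unfold m0. apply Rmult_le_compat; [lra| apply pow_le; lra| lra|].
  apply Rle_trans with (umin ^ tau (cl b)).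
  - replace d with (tau (cl b) + (d - tau (cl b)))%nat at 1 by (assert (H := tau_cl b); lia).
    rewrite pow_add. assert (umin ^ (d - tau (cl b)) <= 1) by (apply pow_le1; lra).
    assert (0 <= umin ^ tau (cl b)) by (apply pow_le; lra). nra.
  - apply pow_incr; lra.
Qed.

Definition rho := 1 - m0.

Lemma pic_upper b s : lo < s < hi -> pic b s <= rho.
Proof.
  intros Hs. assert (Hd := inU2 s Hs). unfold rho, pic.
  set (c := cl b). set (c' := if Nat.eqb c 0 then 1%nat else 0%nat).
  assert (Hr2 := r_ge2 d a hd ha). assert (Hc := cl_lt b).
  assert (Hc' : (c' < rr d a)%nat) by (unfold c'; destruct (Nat.eqb c 0); lia).
  assert (Hne : c <> c') by (unfold c'; destruct (Nat.eqb_spec c 0); lia).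
  assert (H2 := fsum_ge_two (fun b => piq d a tau s b) (rr d a) c c').
  rewrite piq_sum in H2 by auto.
  assert (m0 <= piq d a tau s c').
  { replace c' with (cl c') by (apply cl_id; auto). apply pic_lower; auto. }
  assert (H3 : piq d a tau s c + piq d a tau s c' <= 1).
  { apply H2; auto. intros k _. rewrite piq_eq by auto. apply Rmult_le_pos; [lra| apply pow_le, Rlt_le, uu_pos; auto]. }
  lra.
Qed.

Lemma rho_pos : 0 < rho.
Proof.
  assert (H1 := pic_lower 0 ((lo + hi) / 2)). assert (H2 := pic_upper 0 ((lo + hi) / 2)).
  assert (H3 := m0_pos). assert (lo < (lo + hi) / 2 < hi) by lra. 
  specialize (H1 H). specialize (H2 H). lra.
Qed.

Lemma rho_lt1 : rho < 1.
Proof. unfold rho. assert (H := m0_pos). lra. Qed.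

Lemma ell_Bnd J : Bnd lo hi J ell (fun _ => 1).
Proof.
  unfold ell. apply B_mult1; [apply pic'_Bnd|].
  apply (B_inv lo hi J pic m0); [apply m0_pos| |apply pic_Bnd].
  intros b s Hs. assert (H := pic_lower b s Hs). assert (H0 := m0_pos). rewrite Rabs_right; lra.
Qed.

Definition Pf (en : (nat -> nat) * nat) (s : R) : R := pprod (fun j => pic (fst en j) s) (snd en).
Definition Lf (en : (nat -> nat) * nat) (s : R) : R := lsum (fun j => ell (fst en j) s) (snd en).
Definition Tf (en : (nat -> nat) * nat) (s : R) : R := Pf en s * ccf (fst en (S (snd en))) s.

Lemma Pf_deriv en s : lo < s < hi -> derivable_pt_lim (Pf en) s (Pf en s * Lf en s).
Proof.
  intros Hs. destruct en as [e n]. unfold Pf, Lf; simpl. induction n; simpl.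
  - replace (1 * 0) with 0 by ring. apply dpl_const.
  - assert (Hp := pic_deriv (e (S n)) s (inU2 s Hs)).
    assert (Hl := pic_lower (e (S n)) s Hs). assert (Hm := m0_pos).
    replace (pprod (fun j => pic (e j) s) n * pic (e (S n)) s *
             (lsum (fun j => ell (e j) s) n + ell (e (S n)) s))
      with (pprod (fun j => pic (e j) s) n * lsum (fun j => ell (e j) s) n * pic (e (S n)) s +
            pprod (fun j => pic (e j) s) n * pic' (e (S n)) s)
      by (unfold ell; field; lra).
    apply (dpl_mult (fun y => pprod (fun j => pic (e j) y) n) (pic (e (S n)))); auto.
Qed.

Lemma Pf_bound en s : lo < s < hi -> 0 <= Pf en s <= rho ^ snd en.
Proof.
  intros Hs. destruct en as [e n]. unfold Pf; simpl. induction n; simpl; [lra|].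
  assert (H1 := pic_lower (e (S n)) s Hs). assert (H2 := pic_upper (e (S n)) s Hs).
  assert (Hm := m0_pos). split; [nra|].
  rewrite Rmult_comm. apply Rmult_le_compat; lra.
Qed.

Lemma Pf_Bnd J : forall sg, rho < sg -> Bnd lo hi J Pf (fun en => sg ^ snd en).
Proof.
  assert (Hr := rho_pos).
  induction J; intros sg Hsg; split.
  1,3: exists 1; intros en s Hs; rewrite Rmult_1_l;
    destruct (Pf_bound en s Hs) as [H1 H2]; rewrite Rabs_right by lra;
    eapply Rle_trans; [exact H2| apply pow_incr; lra].
  - auto.
  - exists (fun en s => Pf en s * Lf en s). split; [intros; apply Pf_deriv; auto|].
    set (sg1 := (rho + sg) / 2).
    apply (B_weight lo hi J _ (fun en => sg1 ^ snd en * (sg / sg1) ^ snd en) _ 1).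
    + intros en. apply Rmult_le_pos; apply pow_le; [unfold sg1; lra|]. apply Rlt_le, Rdiv_lt_0_compat; unfold sg1; lra.
    + intros en. rewrite <- Rpow_mult_distr, Rmult_1_l. replace (sg1 * (sg / sg1)) with sg by (field; unfold sg1; lra). lra.
    + apply B_mult.
      * intros; apply pow_le; unfold sg1; lra.
      * intros; apply pow_le, Rlt_le, Rdiv_lt_0_compat; unfold sg1; lra.
      * apply IHJ. unfold sg1; lra.
      * apply (lsum_Bnd lo hi J ell (sg / sg1)); [|apply ell_Bnd].
        apply Rmult_lt_reg_r with sg1; [unfold sg1; lra|]. unfold Rdiv. rewrite Rmult_assoc, Rinv_l by (unfold sg1; lra).
        unfold sg1; lra.
Qed.

Lemma ccf_eq b s : ccf b s = fsum (fun j => (if Nat.ltb j (cl b) then 1 else 0) * pic j s) (rr d a).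
Proof.
  unfold ccf. rewrite cq_fsum.
  assert (Hc := cl_lt b).
  assert (E : rr d a = (cl b + (rr d a - cl b))%nat) by lia.
  rewrite E at 1. rewrite fsum_split.
  rewrite (fsum_ext (fun j => (if Nat.ltb j (cl b) then 1 else 0) * pic j s) (fun j => piq d a tau s j)).
  - rewrite (fsum_ext (fun j => _ * pic (cl b + j)%nat s) (fun _ => 0)), fsum_zero; [ring|].
    intros j _. destruct (Nat.ltb_spec (cl b + j) (cl b)); [lia| ring].
  - intros j Hj. destruct (Nat.ltb_spec j (cl b)); [|lia]. unfold pic. rewrite cl_id by lia. ring.
Qed.

Lemma ccf_Bnd J : Bnd lo hi J ccf (fun _ => 1).
Proof.
  apply (B_ext lo hi J (fun b s => fsum (fun j => (if Nat.ltb j (cl b) then 1 else 0) * pic j s) (rr d a))).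
  - intros; symmetry; apply ccf_eq.
  - apply (B_fsum lo hi J (fun j b s => (if Nat.ltb j (cl b) then 1 else 0) * pic j s)); [intros; lra|].
    intros j _. apply B_mult1.
    + apply B_const; [intros; lra|]. exists 1. intros b. destruct (Nat.ltb j (cl b)); rewrite ?Rabs_R1, ?Rabs_R0; lra.
    + apply (B_reindex lo hi J pic (fun _ => 1) (fun _ => j)). apply pic_Bnd.
Qed.

Lemma Tf_Bnd J sg : rho < sg -> Bnd lo hi J Tf (fun en => sg ^ snd en).
Proof.
  intros Hsg. assert (Hr := rho_pos).
  apply (B_weight lo hi J _ (fun en => sg ^ snd en * 1) _ 1).
  - intros; rewrite Rmult_1_r; apply pow_le; lra.
  - intros; lra.
  - apply B_mult; [intros; apply pow_le; lra| intros; lra| apply Pf_Bnd; auto|].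
    apply (B_reindex lo hi J ccf (fun _ => 1) (fun en : (nat -> nat) * nat => fst en (S (snd en)))).
    apply ccf_Bnd.
Qed.

End Loc2.
End Fam.

End MF.
Import MF.

Module MG.

Definition flo (x : R) : Z := (up x - 1)%Z.

Lemma flo_spec x : IZR (flo x) <= x < IZR (flo x) + 1.
Proof. unfold flo. rewrite minus_IZR. destruct (archimed x). lra. Qed.

Lemma flo_unique z x : IZR z <= x < IZR z + 1 -> flo x = z.
Proof.
  intros H. unfold flo. rewrite <- (up_tech x z); [lia| lra|]. rewrite plus_IZR. lra.
Qed.

Lemma flo_nonneg x : 0 <= x -> (0 <= flo x)%Z.
Proof.
  intros H. destruct (flo_spec x). assert (IZR (-1) < IZR (flo x)) by (replace (IZR (-1)) with (-1) by reflexivity; lra).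
  apply lt_IZR in H2. lia.
Qed.

Section Dig.
Variable r : nat.
Hypothesis Hr : (2 <= r)%nat.

Definition Mn (N : nat) (y : R) : nat := Z.to_nat (flo (INR r ^ N * y)).
Definition Ed (N M j : nat) : nat := ((M / r ^ (N - j)) mod r)%nat.

Lemma rpos : 0 < INR r.
Proof. apply lt_0_INR; lia. Qed.

Lemma Mn_spec N y : 0 <= y -> INR (Mn N y) <= INR r ^ N * y < INR (Mn N y) + 1.
Proof.
  intros Hy. unfold Mn. assert (0 <= INR r ^ N * y) by (apply Rmult_le_pos; [apply pow_le, Rlt_le, rpos| auto]).
  rewrite INR_IZR_INZ, Z2Nat.id by (apply flo_nonneg; auto). apply flo_spec.
Qed.

Lemma Mn_unique N y M : INR M <= INR r ^ N * y < INR M + 1 -> Mn N y = M.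
Proof.
  intros H. unfold Mn. rewrite (flo_unique (Z.of_nat M)); [apply Nat2Z.id|]. rewrite <- INR_IZR_INZ. auto.
Qed.

Lemma digit_E N y j : 0 <= y -> (j <= N)%nat -> digit r y j = Ed N (Mn N y) j.
Proof.
  intros Hy Hj. unfold digit, Ed.
  set (M := Mn N y). set (p := (r ^ (N - j))%nat).
  assert (Hp : (0 < p)%nat) by (unfold p; apply Nat.neq_0_lt_0, Nat.pow_nonzero; lia).
  assert (HM := Mn_spec N y Hy). fold M in HM.
  assert (Hdm := Nat.div_mod_eq M p). assert (Hmb := Nat.mod_upper_bound M p ltac:(lia)).
  assert (HrN : INR r ^ N = INR r ^ j * INR p) by (unfold p; rewrite pow_INR, <- pow_add; f_equal; lia).
  assert (Hpp : 0 < INR p) by (apply lt_0_INR; lia).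
  assert (Hfl : (up (INR r ^ j * y) - 1)%Z = Z.of_nat (M / p)).
  { apply (flo_unique (Z.of_nat (M / p))). rewrite <- INR_IZR_INZ.
    assert (E1 : INR M = INR p * INR (M / p) + INR (M mod p)) by (rewrite <- mult_INR, <- plus_INR; f_equal; auto).
    assert (E2 : INR (M mod p) + 1 <= INR p) by (rewrite <- S_INR; apply le_INR; lia).
    assert (0 <= INR (M mod p)) by apply pos_INR.
    rewrite HrN in HM. split.
    - apply Rmult_le_reg_l with (INR p); auto. nra.
    - apply Rmult_lt_reg_l with (INR p); auto. nra. }
  rewrite Hfl, <- Nat2Z.inj_mod, Nat2Z.id. auto.
Qed.

Lemma digit_lt y j : (digit r y j < r)%nat.
Proof.
  unfold digit. assert (H := Z.mod_pos_bound (up (INR r ^ j * y) - 1) (Z.of_nat r) ltac:(lia)).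
  apply Nat2Z.inj_lt. rewrite Z2Nat.id by lia. lia.
Qed.

Lemma Ed_S N M j : (j <= N)%nat -> Ed (S N) M j = Ed N (M / r) j.
Proof.
  intros Hj. unfold Ed. replace (S N - j)%nat with (S (N - j)) by lia.
  rewrite Nat.pow_succ_r', Nat.Div0.div_div. auto.
Qed.

Lemma Ed_top N M : Ed (S N) M (S N) = (M mod r)%nat.
Proof. unfold Ed. rewrite Nat.sub_diag, Nat.pow_0_r, Nat.div_1_r. auto. Qed.

Lemma incr_lt M : (S (M mod r) < r)%nat -> ((M + 1) / r = M / r /\ (M + 1) mod r = S (M mod r))%nat.
Proof.
  intros H. assert (Hdm := Nat.div_mod_eq M r).
  split; [symmetry; apply (Nat.div_unique _ _ _ (S (M mod r))); auto; lia|].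
  symmetry; apply (Nat.mod_unique _ _ (M / r)); auto; lia.
Qed.

Lemma incr_top M : (S (M mod r) = r)%nat -> ((M + 1) / r = S (M / r) /\ (M + 1) mod r = 0)%nat.
Proof.
  intros H. assert (Hdm := Nat.div_mod_eq M r).
  split; [symmetry; apply (Nat.div_unique _ _ _ 0); [lia|]; rewrite Nat.mul_succ_r; lia|].
  symmetry; apply (Nat.mod_unique _ _ (S (M / r))); [lia|]. rewrite Nat.mul_succ_r; lia.
Qed.

Lemma Ed_last N j : (1 <= j <= N)%nat -> Ed N (r ^ N - 1) j = (r - 1)%nat.
Proof.
  intros Hj. unfold Ed.
  assert (HA : (1 <= r ^ (N - j))%nat) by (apply Nat.le_succ_l, Nat.neq_0_lt_0, Nat.pow_nonzero; lia).
  assert (HB : (1 <= r ^ (j - 1))%nat) by (apply Nat.le_succ_l, Nat.neq_0_lt_0, Nat.pow_nonzero; lia).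
  assert (HN : (r ^ N = r ^ (N - j) * (r * r ^ (j - 1)))%nat).
  { rewrite <- Nat.pow_succ_r', <- Nat.pow_add_r. f_equal. lia. }
  set (A := (r ^ (N - j))%nat) in *. set (B := (r ^ (j - 1))%nat) in *.
  assert (Hq : ((r ^ N - 1) / A = r * B - 1)%nat).
  { symmetry. apply (Nat.div_unique _ _ _ (A - 1)); [lia|]. rewrite HN. nia. }
  rewrite Hq. symmetry. apply (Nat.mod_unique _ _ (B - 1)); [lia| nia].
Qed.

End Dig.

End MG.
Import MG.

Module MH.

Lemma pprod_ext f g n : (forall j, (1 <= j <= n)%nat -> f j = g j) -> pprod f n = pprod g n.
Proof.
  induction n; simpl; intros H; auto. rewrite IHn by (intros; apply H; lia). rewrite H by lia. auto.
Qed.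

Section Ident.
Variables (d : nat) (a tau : nat -> nat).
Hypothesis hd : (1 <= d)%nat.
Hypothesis ha : forall j, (j <= d)%nat -> (1 <= a j)%nat.
Hypothesis htau_range : forall b, (b < rr d a)%nat -> (tau b <= d)%nat.
Hypothesis htau_count : forall j, (j <= d)%nat -> tau_count (rr d a) tau j = a j.

Local Notation r := (rr d a).
Local Notation Tf := (Tf d a tau).
Local Notation Pf := (Pf d a tau).
Local Notation pic := (pic d a tau).
Local Notation ccf := (ccf d a tau).

Definition PS (N : nat) (e : nat -> nat) (s : R) : R := fsum (fun n => Tf (e, n) s) N.

Lemma r2 : (2 <= r)%nat.
Proof. apply r_ge2; auto. Qed.

Lemma Pf_loc e e' n s : (forall j, (1 <= j <= n)%nat -> e j = e' j) -> Pf (e, n) s = Pf (e', n) s.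
Proof. intros H. unfold MF.Pf; simpl. apply pprod_ext. intros j Hj. rewrite H; auto. Qed.

Lemma Tf_loc e e' n s : (forall j, (1 <= j <= S n)%nat -> e j = e' j) -> Tf (e, n) s = Tf (e', n) s.
Proof.
  intros H. unfold MF.Tf. rewrite (Pf_loc e e') by (intros; apply H; lia). simpl. rewrite H by lia. auto.
Qed.

Lemma PS_loc N e e' s : (forall j, (1 <= j <= N)%nat -> e j = e' j) -> PS N e s = PS N e' s.
Proof.
  intros H. unfold PS. apply fsum_ext. intros n Hn. apply Tf_loc. intros; apply H; lia.
Qed.

Lemma PS_S N e s : PS (S N) e s = PS N e s + Pf (e, N) s * ccf (e (S N)) s.
Proof. reflexivity. Qed.

Lemma Pf_S N e s : Pf (e, S N) s = Pf (e, N) s * pic (e (S N)) s.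
Proof. reflexivity. Qed.

Lemma ccf0 s : ccf 0 s = 0.
Proof. unfold MF.ccf. rewrite cl_id by (auto; assert (H := r2); lia). rewrite cq_fsum. reflexivity. Qed.

Lemma ccf_succ b s : (S b < r)%nat -> ccf (S b) s = ccf b s + pic b s.
Proof.
  intros H. unfold MF.ccf, MF.pic. rewrite !cl_id by (auto; lia). rewrite !cq_fsum. reflexivity.
Qed.

Lemma ccf_pic_cq b s : ccf b s + pic b s = cq d a tau s (S (cl d a b)).
Proof. unfold MF.ccf, MF.pic. rewrite !cq_fsum. reflexivity. Qed.

Lemma ccf_top s : 0 < s < 1 / INR (a O) -> ccf (r - 1) s + pic (r - 1) s = 1.
Proof.
  intros Hs. rewrite ccf_pic_cq. rewrite cl_id by (auto; assert (H := r2); lia).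
  replace (S (r - 1)) with r by (assert (H := r2); lia). rewrite cq_fsum. apply piq_sum; auto.
Qed.

Lemma piq_nonneg s b : 0 < s < 1 / INR (a O) -> 0 <= piq d a tau s b.
Proof. intros Hs. rewrite piq_eq by auto. apply Rmult_le_pos; [lra| apply pow_le, Rlt_le, uu_pos; auto]. Qed.

Lemma ccf_pic_le b s : 0 < s < 1 / INR (a O) -> ccf b s + pic b s <= 1.
Proof.
  intros Hs. rewrite ccf_pic_cq, cq_fsum. rewrite <- (piq_sum d a tau hd ha htau_range htau_count s Hs).
  assert (Hc := cl_lt d a hd ha b).
  assert (E : r = (S (cl d a b) + (r - S (cl d a b)))%nat) by lia.
  rewrite E at 1. rewrite fsum_split. assert (0 <= fsum (fun j => piq d a tau s (S (cl d a b) + j)) (r - S (cl d a b))).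
  { apply fsum_nonneg. intros; apply piq_nonneg; auto. } lra.
Qed.

Lemma pic_nonneg b s : 0 < s < 1 / INR (a O) -> 0 <= pic b s.
Proof. intros; apply piq_nonneg; auto. Qed.

Lemma ccf_nonneg b s : 0 < s < 1 / INR (a O) -> 0 <= ccf b s.
Proof. intros Hs. unfold MF.ccf. rewrite cq_fsum. apply fsum_nonneg. intros; apply piq_nonneg; auto. Qed.

Lemma Pf_nonneg en s : 0 < s < 1 / INR (a O) -> 0 <= Pf en s.
Proof.
  intros Hs. destruct en as [e n]. unfold MF.Pf; simpl. induction n; simpl; [lra|].
  apply Rmult_le_pos; auto. apply pic_nonneg; auto.
Qed.

Lemma Tf_nonneg en s : 0 < s < 1 / INR (a O) -> 0 <= Tf en s.
Proof. intros Hs. unfold MF.Tf. apply Rmult_le_pos; [apply Pf_nonneg| apply ccf_nonneg]; auto. Qed.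

Lemma PS_mono_step N e s : 0 < s < 1 / INR (a O) ->
  PS (S N) e s + Pf (e, S N) s <= PS N e s + Pf (e, N) s.
Proof.
  intros Hs. rewrite PS_S, Pf_S. assert (H := ccf_pic_le (e (S N)) s Hs).
  assert (H0 := Pf_nonneg (e, N) s Hs). nra.
Qed.

Lemma PS_mono N N' e s : 0 < s < 1 / INR (a O) -> (N <= N')%nat ->
  PS N' e s + Pf (e, N') s <= PS N e s + Pf (e, N) s.
Proof.
  intros Hs H. induction H; [lra|]. assert (H1 := PS_mono_step m e s Hs). lra.
Qed.

Lemma PS_incr_le N N' e s : 0 < s < 1 / INR (a O) -> (N <= N')%nat -> PS N e s <= PS N' e s.
Proof.
  intros Hs H. induction H; [lra|]. rewrite PS_S. assert (0 <= Tf (e, m) s) by (apply Tf_nonneg; auto).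
  unfold MF.Tf in H0; simpl in H0. lra.
Qed.

Lemma PS_top N e s : 0 < s < 1 / INR (a O) -> (forall j, (1 <= j <= N)%nat -> e j = (r - 1)%nat) ->
  PS N e s + Pf (e, N) s = 1.
Proof.
  intros Hs. induction N; intros H.
  - unfold PS, MF.Pf; simpl; ring.
  - rewrite PS_S, Pf_S. rewrite H by lia.
    replace (PS N e s + Pf (e, N) s * ccf (r - 1) s + Pf (e, N) s * pic (r - 1) s)
      with (PS N e s + Pf (e, N) s * (ccf (r - 1) s + pic (r - 1) s)) by ring.
    rewrite ccf_top by auto. rewrite Rmult_1_r. apply IHN. intros; apply H; lia.
Qed.

Lemma PS_incr N M s : 0 < s < 1 / INR (a O) -> (M + 1 < r ^ N)%nat ->
  PS N (Ed r N (M + 1)) s = PS N (Ed r N M) s + Pf (Ed r N M, N) s.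
Proof.
  intros Hs. revert M. induction N; intros M HM; [simpl in HM; lia|].
  assert (Hr := r2).
  assert (Hloc : forall K, PS N (Ed r (S N) K) s = PS N (Ed r N (K / r)) s /\
                           Pf (Ed r (S N) K, N) s = Pf (Ed r N (K / r), N) s).
  { intros K. split; [apply PS_loc| apply Pf_loc]; intros j Hj; apply Ed_S; lia. }
  rewrite !PS_S, !Pf_S, !Ed_top.
  destruct (Hloc (M + 1)%nat) as [E1 E2]. destruct (Hloc M) as [E3 E4].
  rewrite E1, E2, E3, E4.
  assert (Hmb := Nat.mod_upper_bound M r ltac:(lia)).
  destruct (Nat.eq_dec (S (M mod r)) r) as [Htop|Hlt].
  - destruct (incr_top r Hr M Htop) as [Hq Hm]. rewrite Hq, Hm, ccf0.
    assert (HM' : (M / r + 1 < r ^ N)%nat).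
    { assert (Hdm := Nat.div_mod_eq M r). simpl in HM.
      assert (r * (M / r + 1) < r * r ^ N)%nat by nia. nia. }
    replace (S (M / r)) with (M / r + 1)%nat by lia.
    rewrite IHN by auto.
    replace (M mod r) with (r - 1)%nat by lia.
    assert (Ht := ccf_top s Hs). nra.
  - assert (Hlt' : (S (M mod r) < r)%nat) by lia.
    destruct (incr_lt r Hr M Hlt') as [Hq Hm]. rewrite Hq, Hm.
    rewrite ccf_succ by auto. ring.
Qed.

Lemma PS_E_mono N M M' s : 0 < s < 1 / INR (a O) -> (M <= M')%nat -> (M' < r ^ N)%nat ->
  PS N (Ed r N M) s <= PS N (Ed r N M') s.
Proof.
  intros Hs H. induction H; intros HM; [lra|].
  replace (S m) with (m + 1)%nat by lia. rewrite PS_incr by (auto; lia).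
  assert (0 <= Pf (Ed r N m, N) s) by (apply Pf_nonneg; auto).
  assert (PS N (Ed r N M) s <= PS N (Ed r N m) s) by (apply IHle; lia). lra.
Qed.

End Ident.

End MH.
Import MH.

Module MI.

Lemma Rdiv_le_0_compat a b : 0 <= a -> 0 < b -> 0 <= a / b.
Proof. intros; unfold Rdiv; apply Rmult_le_pos; [auto| apply Rlt_le, Rinv_0_lt_compat; auto]. Qed.

Lemma lim_bounds (u : nat -> R) l N A B : Un_cv u l -> (forall n, (N <= n)%nat -> A <= u n <= B) -> A <= l <= B.
Proof.
  intros Hu H. split; apply Rnot_lt_le; intros Hlt.
  - destruct (Hu (A - l)) as [M HM]; [lra|]. specialize (HM (max M N) (Nat.le_max_l _ _)).
    specialize (H (max M N) (Nat.le_max_r _ _)). unfold Rdist in HM. apply Rabs_def2 in HM. lra.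
  - destruct (Hu (l - B)) as [M HM]; [lra|]. specialize (HM (max M N) (Nat.le_max_l _ _)).
    specialize (H (max M N) (Nat.le_max_r _ _)). unfold Rdist in HM. apply Rabs_def2 in HM. lra.
Qed.

Lemma ser_ext a b : (forall n, a n = b n) -> ser a = ser b.
Proof. intros H. unfold ser. f_equal. apply functional_extensionality. intros N. apply fsum_ext. intros; auto. Qed.

Section Main.
Variables (d : nat) (a tau : nat -> nat).
Hypothesis hd : (1 <= d)%nat.
Hypothesis ha : forall j, (j <= d)%nat -> (1 <= a j)%nat.
Hypothesis htau_range : forall b, (b < rr d a)%nat -> (tau b <= d)%nat.
Hypothesis htau_count : forall j, (j <= d)%nat -> tau_count (rr d a) tau j = a j.
Variables lo hi q : R.
Hypothesis Hlo : 0 < lo.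
Hypothesis Hlohi : lo < hi.
Hypothesis Hhi : hi < 1 / INR (a O).
Hypothesis Hq : lo < q < hi.

Local Notation r := (rr d a).
Local Notation Tf := (Tf d a tau).
Local Notation Pf := (Pf d a tau).
Local Notation PS := (PS d a tau).

Definition sg := (1 + rho d a lo hi) / 2.

Lemma sg_prop : rho d a lo hi < sg /\ 0 <= sg < 1.
Proof.
  assert (H1 := rho_pos d a tau hd ha htau_range htau_count lo hi Hlo Hlohi Hhi).
  assert (H2 := rho_lt1 d a hd ha lo hi Hlo Hlohi Hhi).
  unfold sg; lra.
Qed.

Variable J : nat.
Variables (DT DP : nat -> (nat -> nat) * nat -> R -> R) (KT KP : R).
Hypothesis HT0 : forall en, DT O en = Tf en.
Hypothesis HTj : forall en, jet lo hi J (fun m => DT m en).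
Hypothesis HTb : forall m en s, (m <= J)%nat -> lo < s < hi -> Rabs (DT m en s) <= KT * sg ^ snd en.
Hypothesis HP0 : forall en, DP O en = Pf en.
Hypothesis HPj : forall en, jet lo hi J (fun m => DP m en).
Hypothesis HPb : forall m en s, (m <= J)%nat -> lo < s < hi -> Rabs (DP m en s) <= KP * sg ^ snd en.

Lemma inU3 s : lo < s < hi -> 0 < s < 1 / INR (a O).
Proof. intros; lra. Qed.

Lemma KT_nonneg : 0 <= KT.
Proof. assert (H := HTb O ((fun _ => O), O) q (Nat.le_0_l _) Hq). simpl in H. assert (H' := Rabs_pos (DT 0 (fun _ => 0%nat, 0%nat) q)). lra. Qed.
Lemma KP_nonneg : 0 <= KP.
Proof. assert (H := HPb O ((fun _ => O), O) q (Nat.le_0_l _) Hq). simpl in H. assert (H' := Rabs_pos (DP 0 (fun _ => 0%nat, 0%nat) q)). lra. Qed.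

Definition GG (m : nat) (e : nat -> nat) (s : R) : R := ser (fun n => DT m (e, n) s).
Definition PSm (m N : nat) (e : nat -> nat) (s : R) : R := fsum (fun n => DT m (e, n) s) N.

Lemma GG_jet e : jet lo hi (pred J) (fun m s => GG m e s).
Proof.
  destruct sg_prop as [_ Hs].
  apply (ser_jet lo hi J (fun m n => DT m (e, n)) sg KT); auto.
Qed.

Lemma GG_tail m e N s : (m <= J)%nat -> lo < s < hi -> Rabs (GG m e s - PSm m N e s) <= KT * sg ^ N / (1 - sg).
Proof.
  intros Hm Hs. destruct sg_prop as [_ Hsg].
  destruct (ser_spec (fun n => DT m (e, n) s) sg KT Hsg) as [_ H]; [intros; apply (HTb m (e, n)); auto|].
  apply H.
Qed.

Lemma GG_cv m e s : (m <= J)%nat -> lo < s < hi -> Un_cv (fun N => PSm m N e s) (GG m e s).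
Proof.
  intros Hm Hs. destruct sg_prop as [_ Hsg].
  destruct (ser_spec (fun n => DT m (e, n) s) sg KT Hsg) as [H _]; [intros; apply (HTb m (e, n)); auto|].
  apply H.
Qed.

Lemma DT_loc m e e' n s : (m <= J)%nat -> lo < s < hi -> (forall j, (1 <= j <= S n)%nat -> e j = e' j) ->
  DT m (e, n) s = DT m (e', n) s.
Proof.
  intros Hm Hs He. apply (jet_unique lo hi J (fun m => DT m (e, n)) (fun m => DT m (e', n))); auto.
  intros x Hx. rewrite !HT0. apply Tf_loc; auto.
Qed.

Lemma PSm_loc m N e e' s : (m <= J)%nat -> lo < s < hi -> (forall j, (1 <= j <= N)%nat -> e j = e' j) ->
  PSm m N e s = PSm m N e' s.
Proof.
  intros Hm Hs He. unfold PSm. apply fsum_ext. intros n Hn. apply DT_loc; auto. intros; apply He; lia.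
Qed.

Lemma PSm_incr m N M s : (m <= J)%nat -> lo < s < hi -> (M + 1 < r ^ N)%nat ->
  PSm m N (Ed r N (M + 1)) s = PSm m N (Ed r N M) s + DP m (Ed r N M, N) s.
Proof.
  intros Hm Hs HM.
  apply (jet_unique lo hi J (fun m s => PSm m N (Ed r N (M + 1)) s)
                            (fun m s => PSm m N (Ed r N M) s + DP m (Ed r N M, N) s)); auto.
  - apply (jet_fsum lo hi J (fun m n => DT m (Ed r N (M + 1), n))). intros; apply HTj.
  - apply jet_plus; [|apply HPj]. apply (jet_fsum lo hi J (fun m n => DT m (Ed r N M, n))). intros; apply HTj.
  - intros x Hx. unfold PSm. rewrite HP0.
    rewrite (fsum_ext _ (fun n => Tf (Ed r N (M + 1), n) x)) by (intros; rewrite HT0; reflexivity).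
    rewrite (fsum_ext (fun n => DT 0 (Ed r N M, n) x) (fun n => Tf (Ed r N M, n) x)) by (intros; rewrite HT0; reflexivity).
    apply PS_incr; auto. apply inU3; auto.
Qed.

Lemma PSm_top m N e s : (m <= J)%nat -> lo < s < hi -> (forall j, (1 <= j <= N)%nat -> e j = (r - 1)%nat) ->
  PSm m N e s + DP m (e, N) s = match m with O => 1 | _ => 0 end.
Proof.
  intros Hm Hs He.
  apply (jet_unique lo hi J (fun m s => PSm m N e s + DP m (e, N) s)
                            (fun m _ => match m with O => 1 | _ => 0 end)); auto.
  - apply jet_plus; [|apply HPj]. apply (jet_fsum lo hi J (fun m n => DT m (e, n))). intros; apply HTj.
  - apply jet_const.
  - intros x Hx. unfold PSm. rewrite HP0.
    rewrite (fsum_ext _ (fun n => Tf (e, n) x)) by (intros; rewrite HT0; reflexivity).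
    apply PS_top; auto. apply inU3; auto.
Qed.

Definition dig (y : R) : nat -> nat := fun j => digit r y j.

Definition Ghat (m : nat) (y : R) : R :=
  if Rle_dec 1 y then match m with O => 1 | _ => 0 end else GG m (dig y) q.

Lemma r_pos : 0 < INR r.
Proof. apply lt_0_INR. assert (H := r2 d a hd ha). lia. Qed.

Lemma rN_pos N : 0 < INR r ^ N.
Proof. apply pow_lt, r_pos. Qed.

Lemma rN_INR N : INR (r ^ N) = INR r ^ N.
Proof. apply pow_INR. Qed.

Lemma dig_E N y j : 0 <= y -> (1 <= j <= N)%nat -> dig y j = Ed r N (Mn r N y) j.
Proof. intros Hy Hj. unfold dig. apply digit_E; auto. apply r2; auto. lia. Qed.

Lemma Mn_lt N y : 0 <= y < 1 -> (Mn r N y < r ^ N)%nat.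
Proof.
  intros Hy. assert (H := Mn_spec r (r2 d a hd ha) N y (proj1 Hy)).
  apply INR_lt. rewrite rN_INR. assert (H1 := rN_pos N). nra.
Qed.

Lemma Ghat_cont m : (m <= J)%nat -> forall y0, 0 <= y0 <= 1 -> forall eps, 0 < eps ->
  exists del, 0 < del /\ forall y, 0 <= y <= 1 -> Rabs (y - y0) < del -> Rabs (Ghat m y - Ghat m y0) < eps.
Proof.
  intros Hm y0 Hy0 eps He.
  destruct sg_prop as [_ Hsg]. assert (HKT := KT_nonneg). assert (HKP := KP_nonneg).
  set (C := 2 * (KT / (1 - sg)) + KP + 1).
  assert (HC : 0 < C). { unfold C. assert (0 <= KT / (1 - sg)) by (apply Rdiv_le_0_compat; lra). lra. }
  destruct (pow_small sg Hsg (eps / C)) as [N HN]; [apply Rdiv_lt_0_compat; auto|].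
  specialize (HN N (le_n N)).
  assert (Hs0 : 0 <= sg ^ N) by (apply pow_le; lra).
  assert (Htau : KT * sg ^ N / (1 - sg) = (KT / (1 - sg)) * sg ^ N) by (field; lra).
  assert (HCe : C * sg ^ N < eps).
  { apply Rmult_lt_reg_l with (/ C); [apply Rinv_0_lt_compat; auto|].
    rewrite <- Rmult_assoc, Rinv_l, Rmult_1_l by lra. unfold Rdiv in HN. lra. }
  assert (Hbound : 2 * (KT * sg ^ N / (1 - sg)) + KP * sg ^ N < eps).
  { rewrite Htau. unfold C in HCe. nra. }
  assert (Hrn := rN_pos N).
  assert (Hr2 := r2 d a hd ha).
  assert (Hq' := Hq).
  destruct (Rle_dec 1 y0) as [Hy1|Hy1].
  -
    assert (y0 = 1) by lra. subst y0.
    exists (/ (INR r ^ N)). split; [apply Rinv_0_lt_compat; auto|].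
    intros y Hy Hyy. unfold Ghat at 2. destruct (Rle_dec 1 1) as [_|Hn1]; [|lra].
    unfold Ghat. destruct (Rle_dec 1 y) as [Hy1'|Hy1'].
    + replace (_ - _) with 0 by ring. rewrite Rabs_R0; lra.
    + assert (Hy' : 0 <= y < 1) by lra.
      assert (H1N : (1 <= r ^ N)%nat) by (apply Nat.le_succ_l, Nat.neq_0_lt_0, Nat.pow_nonzero; lia).
      assert (HMn : Mn r N y = (r ^ N - 1)%nat).
      { apply Mn_unique. rewrite minus_INR by auto. rewrite rN_INR. simpl INR.
        apply Rabs_def2 in Hyy.
        assert (INR r ^ N * (1 - y) < 1).
        { apply Rmult_lt_reg_l with (/ INR r ^ N); [apply Rinv_0_lt_compat; auto|].
          rewrite <- Rmult_assoc, Rinv_l, Rmult_1_l, Rmult_1_r by lra. lra. }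
        split; nra. }
      assert (Hd : forall j, (1 <= j <= N)%nat -> dig y j = (r - 1)%nat).
      { intros j Hj. rewrite (dig_E N) by (auto; lra). rewrite HMn. apply Ed_last; auto. }
      assert (Htop := PSm_top m N (dig y) q Hm Hq Hd).
      assert (Ht := GG_tail m (dig y) N q Hm Hq).
      assert (Hp := HPb m (dig y, N) q Hm Hq). simpl in Hp.
      replace (GG m (dig y) q - match m with O => 1 | S _ => 0 end)
        with ((GG m (dig y) q - PSm m N (dig y) q) - DP m (dig y, N) q) by (rewrite <- Htop; ring).
      eapply Rle_lt_trans; [apply Rabs_triang|]. rewrite Rabs_Ropp.
      assert (0 <= KT * sg ^ N / (1 - sg)) by (rewrite Htau; apply Rmult_le_pos; auto; apply Rdiv_le_0_compat; lra).
      lra.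
  -
    assert (Hy0' : 0 <= y0 < 1) by lra.
    set (M0 := Mn r N y0). set (x0 := INR r ^ N * y0).
    assert (HM0 := Mn_spec r Hr2 N y0 (proj1 Hy0')). fold M0 x0 in HM0.
    assert (HM0lt := Mn_lt N y0 Hy0'). fold M0 in HM0lt.
    set (w := if Rlt_dec (INR M0) x0 then x0 - INR M0 else 1).
    assert (Hw : 0 < w) by (unfold w; destruct Rlt_dec; lra).
    exists (Rmin (INR M0 + 1 - x0) w / INR r ^ N). split.
    { apply Rdiv_lt_0_compat; auto. apply Rmin_pos; lra. }
    intros y Hy Hyy.
    assert (Hm1 := Rmin_l (INR M0 + 1 - x0) w). assert (Hm2 := Rmin_r (INR M0 + 1 - x0) w).
    set (x := INR r ^ N * y).
    assert (Hxx : Rabs (x - x0) < Rmin (INR M0 + 1 - x0) w).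
    { replace (x - x0) with (INR r ^ N * (y - y0)) by (unfold x, x0; ring). rewrite Rabs_mult, (Rabs_right (INR r ^ N)) by lra.
      apply Rmult_lt_reg_l with (/ INR r ^ N); [apply Rinv_0_lt_compat; auto|].
      rewrite <- Rmult_assoc, Rinv_l, Rmult_1_l by lra. unfold Rdiv in Hyy. lra. }
    apply Rabs_def2 in Hxx.
    assert (HrNM : INR M0 + 1 <= INR r ^ N) by (rewrite <- rN_INR, <- S_INR; apply le_INR; lia).
    assert (Hx0 : 0 <= x) by (unfold x; apply Rmult_le_pos; lra).
    assert (Hyl : y < 1).
    { apply Rmult_lt_reg_l with (INR r ^ N); auto. fold x. lra. }
    unfold Ghat. destruct (Rle_dec 1 y0) as [Hn1|_]; [lra|]. destruct (Rle_dec 1 y) as [Hn2|_]; [lra|].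
    assert (HT1 := GG_tail m (dig y0) N q Hm Hq).
    assert (HT2 := GG_tail m (dig y) N q Hm Hq).
    assert (0 <= KT * sg ^ N / (1 - sg)) by (rewrite Htau; apply Rmult_le_pos; auto; apply Rdiv_le_0_compat; lra).
    assert (HL0 : PSm m N (dig y0) q = PSm m N (Ed r N M0) q).
    { apply PSm_loc; auto. intros j Hj. apply dig_E; [lra| lia]. }
    destruct (Rle_dec (INR M0) x) as [Hge|Hlt].
    + assert (HMy : Mn r N y = M0) by (apply Mn_unique; fold x; lra).
      assert (HL : PSm m N (dig y) q = PSm m N (Ed r N M0) q).
      { apply PSm_loc; auto. intros j Hj. rewrite <- HMy. apply dig_E; auto; lra. }
      replace (GG m (dig y) q - GG m (dig y0) q)
        with ((GG m (dig y) q - PSm m N (dig y) q) - (GG m (dig y0) q - PSm m N (dig y0) q))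
        by (rewrite HL, HL0; ring).
      eapply Rle_lt_trans; [apply Rabs_triang|]. rewrite Rabs_Ropp.
      assert (0 <= KP * sg ^ N) by (apply Rmult_le_pos; auto). lra.
    + assert (Hxe : INR M0 = x0).
      { unfold w in *. destruct (Rlt_dec (INR M0) x0); lra. }
      assert (Hw1 : w = 1) by (unfold w; destruct (Rlt_dec (INR M0) x0); lra).
      assert (HM0pos : (1 <= M0)%nat).
      { destruct M0; [simpl in Hlt; lra| lia]. }
      assert (HMy : Mn r N y = (M0 - 1)%nat).
      { apply Mn_unique. rewrite minus_INR by auto. fold x. simpl INR. lra. }
      assert (HL : PSm m N (dig y) q = PSm m N (Ed r N (M0 - 1)) q).
      { apply PSm_loc; auto. intros j Hj. rewrite <- HMy. apply dig_E; auto; lra. }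
      assert (Hinc := PSm_incr m N (M0 - 1) q Hm Hq ltac:(lia)).
      replace (M0 - 1 + 1)%nat with M0 in Hinc by lia.
      assert (Hp := HPb m (Ed r N (M0 - 1), N) q Hm Hq). simpl in Hp.
      replace (GG m (dig y) q - GG m (dig y0) q)
        with ((GG m (dig y) q - PSm m N (dig y) q) - (GG m (dig y0) q - PSm m N (dig y0) q)
              - DP m (Ed r N (M0 - 1), N) q)
        by (rewrite HL, HL0, Hinc; ring).
      eapply Rle_lt_trans; [apply Rabs_triang|]. rewrite Rabs_Ropp.
      eapply Rle_lt_trans; [apply Rplus_le_compat_r; apply Rabs_triang|]. rewrite Rabs_Ropp.
      lra.
Qed.


Lemma Fq_GG y s : 0 <= y < 1 -> lo < s < hi -> Fq d a tau s y = GG O (dig y) s.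
Proof.
  intros Hy Hs. unfold Fq. destruct (Rle_dec 1 y) as [Hn|_]; [lra|].
  set (f := fun n => pprod (fun j => piq d a tau s (digit r y j)) n * cq d a tau s (digit r y (S n))).
  assert (Hf : forall n, f n = Tf (dig y, n) s).
  { intros n. unfold f, MF.Tf, MF.Pf, MF.pic, MF.ccf, dig; simpl.
    rewrite (cl_id d a hd (digit r y (S n))) by (apply digit_lt, r2; auto).
    f_equal. apply pprod_ext. intros j _. rewrite cl_id; auto. apply digit_lt, r2; auto. }
  assert (Hinf : infinite_sum f (GG O (dig y) s)).
  { intros eps He. destruct (GG_cv O (dig y) s (Nat.le_0_l _) Hs eps He) as [N HN].
    exists N. intros n Hn. rewrite fsum_sum_f_R0.
    rewrite (fsum_ext f (fun k => DT O (dig y, k) s)) by (intros; rewrite Hf, HT0; reflexivity).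
    apply (HN (S n)). lia. }
  apply (uniqueness_sum f); auto.
  apply (epsilon_spec (inhabits 0) (fun l => infinite_sum f l)). exists (GG O (dig y) s); auto.
Qed.

Lemma Fq_bounds y N : 0 <= y < 1 ->
  PS N (Ed r N (Mn r N y)) q <= Fq d a tau q y <= PS N (Ed r N (Mn r N y)) q + Pf (Ed r N (Mn r N y), N) q.
Proof.
  intros Hy. rewrite Fq_GG by auto.
  assert (Hd := inU3 q Hq).
  assert (E1 : PS N (dig y) q = PS N (Ed r N (Mn r N y)) q).
  { apply PS_loc; auto. intros j Hj. apply dig_E; [lra| lia]. }
  assert (E2 : Pf (dig y, N) q = Pf (Ed r N (Mn r N y), N) q).
  { apply Pf_loc. intros j Hj. apply dig_E; [lra| lia]. }
  rewrite <- E1, <- E2.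
  apply (lim_bounds (fun N' => PSm O N' (dig y) q) _ N).
  - apply GG_cv; auto; lia.
  - intros n Hn. unfold PSm.
    rewrite (fsum_ext _ (fun k => Tf (dig y, k) q)) by (intros; rewrite HT0; reflexivity).
    fold (PS n (dig y) q). split.
    + apply PS_incr_le; auto.
    + assert (H1 := PS_mono d a tau hd ha htau_range htau_count N n (dig y) q Hd Hn).
      assert (0 <= Pf (dig y, n) q) by (apply Pf_nonneg; auto). lra.
Qed.

Lemma Pf_pos en : 0 < Pf en q.
Proof.
  destruct en as [e n]. unfold MF.Pf; simpl. induction n; simpl; [lra|].
  assert (H := pic_lower d a tau hd ha htau_range lo hi Hlo Hlohi Hhi (e (S n)) q Hq).
  assert (H0 := m0_pos d a hd ha lo hi Hlo Hlohi Hhi). nra.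
Qed.

Lemma rN_ge N : INR N <= INR r ^ N.
Proof.
  assert (Hr2 := r2 d a hd ha). assert (H : 2 <= INR r) by (apply (le_INR 2); auto).
  assert (H1 := bernoulli_lin (INR r) N ltac:(lra)). assert (0 <= INR N) by apply pos_INR. nra.
Qed.

Lemma big_N e : 0 < e -> exists N, 2 < INR r ^ N * e.
Proof.
  intros He. destruct (archimed_cor1 (e / 2)) as [N [HN HN0]]; [lra|].
  exists N. assert (HNp : 0 < INR N) by (apply lt_0_INR; auto).
  assert (H1 := rN_ge N).
  assert (2 < INR N * e).
  { apply Rmult_lt_reg_l with (/ INR N); [apply Rinv_0_lt_compat; auto|].
    rewrite <- Rmult_assoc, Rinv_l, Rmult_1_l by lra. lra. }
  nra.
Qed.

Lemma Fq_one : Fq d a tau q 1 = 1.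
Proof. unfold Fq. destruct (Rle_dec 1 1); [auto| lra]. Qed.

Lemma Fq_strict y y' : 0 <= y -> y < y' -> y' <= 1 -> Fq d a tau q y < Fq d a tau q y'.
Proof.
  intros Hy Hyy Hy'. assert (Hd := inU3 q Hq). assert (Hr2 := r2 d a hd ha).
  destruct (big_N (y' - y)) as [N HN]; [lra|].
  assert (Hrn := rN_pos N).
  set (M := Mn r N y). assert (HM := Mn_spec r Hr2 N y Hy). fold M in HM.
  assert (Hy1 : 0 <= y < 1) by lra.
  destruct (Fq_bounds y N Hy1) as [_ Hup]. fold M in Hup.
  destruct (Rle_dec 1 y') as [H1|H1].
  - assert (y' = 1) by lra. subst y'.
    assert (HM2 : (M + 2 < r ^ N)%nat).
    { apply INR_lt. rewrite rN_INR, plus_INR. simpl INR. nra. }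
    assert (I1 := PS_incr d a tau hd ha htau_range htau_count N M q Hd ltac:(lia)).
    assert (I2 := PS_incr d a tau hd ha htau_range htau_count N (M + 1) q Hd ltac:(lia)).
    assert (Hp := Pf_pos (Ed r N (M + 1), N)).
    assert (Hmo := PS_E_mono d a tau hd ha htau_range htau_count N (M + 1 + 1) (r ^ N - 1) q Hd ltac:(lia) ltac:(lia)).
    assert (Htop := PS_top d a tau hd ha htau_range htau_count N (Ed r N (r ^ N - 1)) q Hd
                      ltac:(intros j Hj; apply Ed_last; auto)).
    assert (0 <= Pf (Ed r N (r ^ N - 1), N) q) by (apply Pf_nonneg; auto).
    rewrite Fq_one. lra.
  - assert (HM' := Mn_spec r Hr2 N y' ltac:(lra)).
    assert (INR M + 1 < INR (Mn r N y')) by nra.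
    assert (HM2 : (M + 1 < Mn r N y')%nat) by (apply INR_lt; rewrite plus_INR; simpl INR; lra).
    assert (HM3 : (Mn r N y' < r ^ N)%nat) by (apply Mn_lt; lra).
    assert (I1 := PS_incr d a tau hd ha htau_range htau_count N M q Hd ltac:(lia)).
    assert (I2 := PS_incr d a tau hd ha htau_range htau_count N (M + 1) q Hd ltac:(lia)).
    assert (Hp := Pf_pos (Ed r N (M + 1), N)).
    assert (Hmo := PS_E_mono d a tau hd ha htau_range htau_count N (M + 1 + 1) (Mn r N y') q Hd ltac:(lia) ltac:(lia)).
    destruct (Fq_bounds y' N ltac:(lra)) as [Hlo' _].
    lra.
Qed.

Lemma Fq_zero : Fq d a tau q 0 = 0.
Proof.
  rewrite Fq_GG by (auto; lra).
  assert (Hd0 : forall j, dig 0 j = O).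
  { intros j. unfold dig, digit. rewrite Rmult_0_r.
    replace (up 0 - 1)%Z with 0%Z; [reflexivity|].
    symmetry. apply (flo_unique 0 0). simpl; lra. }
  unfold GG. rewrite (ser_ext _ (fun _ => 0)).
  - unfold ser. apply lim_seq_spec. rewrite (functional_extensionality _ (fun _ => 0)).
    + intros eps He. exists O. intros. unfold Rdist. rewrite Rminus_0_r, Rabs_R0; auto.
    + intros N. apply fsum_zero.
  - intros n. rewrite HT0. unfold MF.Tf. simpl. rewrite Hd0. rewrite ccf0 by auto. ring.
Qed.

Lemma Fq_Ghat y : 0 <= y <= 1 -> Fq d a tau q y = Ghat O y.
Proof.
  intros Hy. unfold Ghat. destruct (Rle_dec 1 y) as [H|H].
  - unfold Fq. destruct (Rle_dec 1 y); [auto| lra].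
  - apply Fq_GG; auto; lra.
Qed.


Lemma Fcont y0 : 0 <= y0 <= 1 -> forall eps, 0 < eps ->
  exists del, 0 < del /\ forall y, 0 <= y <= 1 -> Rabs (y - y0) < del ->
    Rabs (Fq d a tau q y - Fq d a tau q y0) < eps.
Proof.
  intros Hy0 eps He. destruct (Ghat_cont O (Nat.le_0_l _) y0 Hy0 eps He) as [del [Hd H]].
  exists del; split; auto. intros y Hy Hyy. rewrite !Fq_Ghat by auto. apply H; auto.
Qed.

Definition clamp (t : R) : R := Rmax 0 (Rmin 1 t).

Lemma clamp_prop t t' : 0 <= clamp t <= 1 /\ Rabs (clamp t' - clamp t) <= Rabs (t' - t) /\
  (0 <= t <= 1 -> clamp t = t).
Proof.
  unfold clamp, Rmax, Rmin. repeat destruct Rle_dec; unfold Rabs; repeat destruct Rcase_abs; repeat split; lra.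
Qed.

Lemma Fq_exists x : 0 <= x <= 1 -> exists y, 0 <= y <= 1 /\ Fq d a tau q y = x.
Proof.
  intros Hx.
  assert (Hc : continuity (fun t => Fq d a tau q (clamp t) - x)).
  { intros t. apply cont_pt_eps. intros eps He.
    destruct (clamp_prop t t) as [Hct _].
    destruct (Fcont (clamp t) Hct eps He) as [del [Hd H]].
    exists del; split; auto. intros t' Ht'.
    destruct (clamp_prop t t') as [_ [Hl _]]. destruct (clamp_prop t' t') as [Hct' _].
    replace (Fq d a tau q (clamp t') - x - (Fq d a tau q (clamp t) - x))
      with (Fq d a tau q (clamp t') - Fq d a tau q (clamp t)) by ring.
    apply H; auto. lra. }
  destruct (IVT_cor _ 0 1 Hc) as [z [Hz Hg]]; [lra| |].
  - destruct (clamp_prop 0 0) as [_ [_ H0]]. destruct (clamp_prop 1 1) as [_ [_ H1]].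
    rewrite H0, H1, Fq_zero, Fq_one by lra. nra.
  - exists z. destruct (clamp_prop z z) as [_ [_ Hz']]. rewrite Hz' in Hg by auto. split; [auto| lra].
Qed.

Definition Yf (x : R) : R := Fq_inv d a tau q x.

Lemma Yf_spec x : 0 <= x <= 1 -> 0 <= Yf x <= 1 /\ Fq d a tau q (Yf x) = x.
Proof.
  intros Hx. unfold Yf, Fq_inv.
  apply (epsilon_spec (inhabits 0) (fun y => 0 <= y <= 1 /\ Fq d a tau q y = x)).
  apply Fq_exists; auto.
Qed.

Lemma Yf_cont x0 : 0 <= x0 <= 1 -> forall eps, 0 < eps ->
  exists del, 0 < del /\ forall x, 0 <= x <= 1 -> Rabs (x - x0) < del -> Rabs (Yf x - Yf x0) < eps.
Proof.
  intros Hx0 eps He. destruct (Yf_spec x0 Hx0) as [Hy0 HF0].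
  set (y0 := Yf x0) in *.
  set (dl := if Rle_dec 0 (y0 - eps / 2) then x0 - Fq d a tau q (y0 - eps / 2) else 1).
  set (dh := if Rle_dec (y0 + eps / 2) 1 then Fq d a tau q (y0 + eps / 2) - x0 else 1).
  assert (Hdl : 0 < dl).
  { unfold dl. destruct (Rle_dec 0 (y0 - eps / 2)); [|lra].
    assert (Fq d a tau q (y0 - eps / 2) < Fq d a tau q y0) by (apply Fq_strict; lra). lra. }
  assert (Hdh : 0 < dh).
  { unfold dh. destruct (Rle_dec (y0 + eps / 2) 1) as [Hle|Hle]; [|lra].
    assert (Fq d a tau q y0 < Fq d a tau q (y0 + eps / 2)) by (apply Fq_strict; lra). lra. }
  exists (Rmin dl dh). split; [apply Rmin_pos; auto|].
  intros x Hx Hxx. destruct (Yf_spec x Hx) as [Hy HF].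
  assert (H1 := Rmin_l dl dh). assert (H2 := Rmin_r dl dh). apply Rabs_def2 in Hxx.
  apply Rabs_def1.
  - apply Rnot_le_lt. intros Hc.
    assert (Hr : y0 + eps / 2 <= 1) by lra.
    assert (Fq d a tau q (y0 + eps / 2) < Fq d a tau q (Yf x)) by (apply Fq_strict; lra).
    assert (Edh : dh = Fq d a tau q (y0 + eps / 2) - x0) by (unfold dh; destruct (Rle_dec (y0 + eps / 2) 1); [auto|contradiction]). lra.
  - apply Rnot_le_lt. intros Hc.
    assert (Hr : 0 <= y0 - eps / 2) by lra.
    assert (Fq d a tau q (Yf x) < Fq d a tau q (y0 - eps / 2)) by (apply Fq_strict; lra).
    assert (Edl : dl = x0 - Fq d a tau q (y0 - eps / 2)) by (unfold dl; destruct (Rle_dec 0 (y0 - eps / 2)); [auto|contradiction]). lra.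
Qed.

Lemma main_core k : J = S (S k) ->
  exists T : R -> R,
    (forall x, 0 <= x <= 1 -> is_nth_deriv k (fun s => Sp d a tau q s x) q (T x)) /\
    continuous_on_01 T.
Proof.
  intros HJ. exists (fun x => Ghat k (Yf x)). split.
  - intros x Hx. destruct (Yf_spec x Hx) as [Hy _].
    unfold Sp. fold (Yf x). set (y := Yf x) in *.
    unfold Ghat. destruct (Rle_dec 1 y) as [H1|H1].
    + apply (jet_nth lo hi k (fun m _ => match m with O => 1 | _ => 0 end)); auto.
      * apply jet_const.
      * intros s Hs. unfold Fq. destruct (Rle_dec 1 y); [auto| lra].
    + assert (Hj := GG_jet (dig y)). rewrite HJ in Hj. simpl in Hj.
      apply (jet_nth lo hi (S k) (fun m s => GG m (dig y) s)); auto.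
      intros s Hs. apply Fq_GG; auto. lra.
  - intros x0 Hx0 eps He.
    destruct (Yf_spec x0 Hx0) as [Hy0 _].
    destruct (Ghat_cont k ltac:(lia) (Yf x0) Hy0 eps He) as [d1 [Hd1 H1]].
    destruct (Yf_cont x0 Hx0 d1 Hd1) as [d2 [Hd2 H2]].
    exists d2; split; auto. intros x Hx Hxx.
    destruct (Yf_spec x Hx) as [Hy _]. apply H1; auto.
Qed.

End Main.

End MI.
Import MI.


Theorem mainTheorem9 (d : nat) (a tau : nat -> nat)
  (hd : (1 <= d)%nat)
  (ha : forall j, (j <= d)%nat -> (1 <= a j)%nat)
  (htau_range : forall b, (b < rr d a)%nat -> (tau b <= d)%nat)
  (htau_count : forall j, (j <= d)%nat -> tau_count (rr d a) tau j = a j)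
  (q : R) (hq : 0 < q < 1 / INR (a 0%nat))
  (k : nat) (hk : (1 <= k)%nat) :
  exists T : R -> R,
    (forall x, 0 <= x <= 1 ->
       is_nth_deriv k (fun s => Sp d a tau q s x) q (T x)) /\
    continuous_on_01 T.
Proof.
  set (lo := q / 2). set (hi := (q + 1 / INR (a 0%nat)) / 2).
  assert (Hlo : 0 < lo) by (unfold lo; lra).
  assert (Hlohi : lo < hi) by (unfold lo, hi; lra).
  assert (Hhi : hi < 1 / INR (a 0%nat)) by (unfold hi; lra).
  assert (Hq : lo < q < hi) by (unfold lo, hi; lra).
  destruct (sg_prop d a tau hd ha htau_range htau_count lo hi Hlo Hlohi Hhi) as [Hsg1 Hsg2].
  assert (Hw : forall en : (nat -> nat) * nat, 0 <= sg d a lo hi ^ snd en) by (intros; apply pow_le; lra).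
  destruct (B_extract lo hi (S (S k)) (Tf d a tau) (fun en => sg d a lo hi ^ snd en) Hw
              (Tf_Bnd d a tau hd ha htau_range htau_count lo hi Hlo Hlohi Hhi (S (S k)) _ Hsg1))
    as [DT [KT [HT0 [HTj HTb]]]].
  destruct (B_extract lo hi (S (S k)) (Pf d a tau) (fun en => sg d a lo hi ^ snd en) Hw
              (Pf_Bnd d a tau hd ha htau_range htau_count lo hi Hlo Hlohi Hhi (S (S k)) _ Hsg1))
    as [DP [KP [HP0 [HPj HPb]]]].
  apply (main_core d a tau hd ha htau_range htau_count lo hi q Hlo Hlohi Hhi Hq (S (S k)) DT DP KT KP);
    auto.
Qed.
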